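(* Let $X$ be a uniformly convex Banach space and $Y$ a Banach space with the Schur property (every weakly convergent sequence in $Y$ is norm convergent). Then the pair $(X,Y)$ has the sBPBp. In particular, the pair $(\ell_2,\ell_1)$ has the sBPBp.
   Context: All Banach spaces are over $\mathbb{K}=\mathbb{R}$ or $\mathbb{C}$. $S_X$ denotes the unit sphere of $X$ and $\mathcal{L}(X,Y)$ the space of bounded linear operators from $X$ to $Y$ with the operator norm. A pair of Banach spaces $(X,Y)$ has the strong Bishop–Phelps–Bollobás property (sBPBp) if for every $\varepsilon>0$ and every $T\in\mathcal{L}(X,Y)$ with $\|T\|=1$ there exists $\eta=\eta(\varepsilon,T)>0$ such that whenever $x_0\in S_X$ satisfies $\|T(x_0)\|>1-\eta$, there exists $x_1\in S_X$ with $\|T(x_1)\|=1$ and $\|x_1-x_0\|<\varepsilon$. *)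

(* Defs.v *)
From Stdlib Require Import Reals Lra Psatz.
Open Scope R_scope.

Inductive scalar_field := RealScalars | ComplexScalars.

(* C is modelled as R * R (real part, imaginary part). *)
Definition K (k : scalar_field) : Type :=
  match k with RealScalars => R | ComplexScalars => (R * R)%type end.

Definition Kadd {k} : K k -> K k -> K k :=
  match k with
  | RealScalars => fun a b : R => a + b
  | ComplexScalars => fun a b : R * R => (fst a + fst b, snd a + snd b)
  end.
Definition Kopp {k} : K k -> K k :=
  match k with
  | RealScalars => fun a : R => - a
  | ComplexScalars => fun a : R * R => (- fst a, - snd a)
  end.
Definition Kmul {k} : K k -> K k -> K k :=
  match k with
  | RealScalars => fun a b : R => a * b
  | ComplexScalars => fun a b : R * R =>
      (fst a * fst b - snd a * snd b, fst a * snd b + snd a * fst b)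
  end.
Definition K0 {k} : K k :=
  match k with RealScalars => (0 : R) | ComplexScalars => ((0, 0) : R * R) end.
Definition K1 {k} : K k :=
  match k with RealScalars => (1 : R) | ComplexScalars => ((1, 0) : R * R) end.
Definition Kreal {k} (r : R) : K k :=
  match k with RealScalars => r | ComplexScalars => ((r, 0) : R * R) end.
Definition Kabs {k} : K k -> R :=
  match k with
  | RealScalars => fun a : R => Rabs a
  | ComplexScalars => fun a : R * R => sqrt (fst a * fst a + snd a * snd a)
  end.

Lemma Kabs_pos k (a : K k) : 0 <= Kabs a.
Proof. destruct k; simpl. apply Rabs_pos. apply sqrt_pos. Qed.

Lemma Kabs_opp k (a : K k) : Kabs (Kopp a) = Kabs a.
Proof.
  destruct k; simpl. apply Rabs_Ropp.
  destruct a as [x y]; simpl. f_equal. ring.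
Qed.

Lemma Kabs_K0 k : Kabs (@K0 k) = 0.
Proof.
  destruct k; simpl. apply Rabs_R0.
  replace (0 * 0 + 0 * 0) with 0 by ring. apply sqrt_0.
Qed.

Lemma Kabs_mul k (a b : K k) : Kabs (Kmul a b) = Kabs a * Kabs b.
Proof.
  destruct k; simpl. apply Rabs_mult.
  destruct a as [x y], b as [u v]; simpl.
  rewrite <- sqrt_mult by nra. f_equal. ring.
Qed.

Lemma Kabs_triang k (a b : K k) : Kabs (Kadd a b) <= Kabs a + Kabs b.
Proof.
  destruct k; simpl. apply Rabs_triang.
  destruct a as [x y], b as [u v]; simpl.
  set (s := sqrt (x * x + y * y)). set (t := sqrt (u * u + v * v)).
  assert (Hs : s * s = x * x + y * y) by (apply sqrt_sqrt; nra).
  assert (Ht : t * t = u * u + v * v) by (apply sqrt_sqrt; nra).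
  assert (Hs0 : 0 <= s) by apply sqrt_pos.
  assert (Ht0 : 0 <= t) by apply sqrt_pos.
  assert (HL : (x * u + y * v) * (x * u + y * v) <= (s * t) * (s * t)).
  { replace ((s * t) * (s * t)) with ((s * s) * (t * t)) by ring.
    rewrite Hs, Ht.
    assert (0 <= (x * v - y * u) * (x * v - y * u)) by apply Rle_0_sqr. nra. }
  assert (HC : x * u + y * v <= s * t).
  { destruct (Rle_dec (x * u + y * v) 0) as [H|H]. nra.
    apply Rnot_le_lt in H.
    destruct (Rle_dec (x * u + y * v) (s * t)) as [H'|H']; auto.
    apply Rnot_le_lt in H'. exfalso.
    assert ((s * t) * (s * t) < (x * u + y * v) * (x * u + y * v)).
    { apply Rmult_le_0_lt_compat; nra. }
    lra. }
  apply Rsqr_incr_0_var; [| lra].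
  unfold Rsqr. rewrite sqrt_sqrt.
  - nra.
  - pose proof (Rle_0_sqr (x + u)); pose proof (Rle_0_sqr (y + v)); unfold Rsqr in *; lra.
Qed.

Record NormedData (k : scalar_field) := {
  carrier :> Type;
  vzero : carrier;
  vadd : carrier -> carrier -> carrier;
  vopp : carrier -> carrier;
  vscal : K k -> carrier -> carrier;
  norm : carrier -> R
}.
Arguments vzero {k X} : rename.
Arguments vadd {k X} : rename.
Arguments vopp {k X} : rename.
Arguments vscal {k X} : rename.
Arguments norm {k X} : rename.

Definition vsub {k} {X : NormedData k} (x y : X) : X := vadd x (vopp y).

Definition is_Banach {k} (X : NormedData k) : Prop :=
  (forall x y z : X, vadd x (vadd y z) = vadd (vadd x y) z) /\
  (forall x y : X, vadd x y = vadd y x) /\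
  (forall x : X, vadd x vzero = x) /\
  (forall x : X, vadd x (vopp x) = vzero) /\
  (forall (a b : K k) (x : X), vscal a (vscal b x) = vscal (Kmul a b) x) /\
  (forall x : X, vscal K1 x = x) /\
  (forall (a : K k) (x y : X), vscal a (vadd x y) = vadd (vscal a x) (vscal a y)) /\
  (forall (a b : K k) (x : X), vscal (Kadd a b) x = vadd (vscal a x) (vscal b x)) /\
  (forall x : X, norm x = 0 -> x = vzero) /\
  (forall (a : K k) (x : X), norm (vscal a x) = Kabs a * norm x) /\
  (forall x y : X, norm (vadd x y) <= norm x + norm y) /\
  (forall u : nat -> X,
     (forall eps, eps > 0 -> exists N, forall m n, (m >= N)%nat -> (n >= N)%nat ->
        norm (vsub (u m) (u n)) < eps) ->
     exists l : X, forall eps, eps > 0 -> exists N, forall n, (n >= N)%nat ->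
        norm (vsub (u n) l) < eps).

Definition in_sphere {k} {X : NormedData k} (x : X) : Prop := norm x = 1.

Definition is_linear {k} {X Y : NormedData k} (T : X -> Y) : Prop :=
  (forall x y : X, T (vadd x y) = vadd (T x) (T y)) /\
  (forall (a : K k) (x : X), T (vscal a x) = vscal a (T x)).

Definition is_bounded_linear {k} {X Y : NormedData k} (T : X -> Y) : Prop :=
  is_linear T /\ exists M, forall x : X, norm (T x) <= M * norm x.

Definition has_opnorm {k} {X Y : NormedData k} (T : X -> Y) (c : R) : Prop :=
  is_lub (fun r => exists x : X, norm x <= 1 /\ r = norm (T x)) c.

Definition is_bounded_functional {k} {X : NormedData k} (f : X -> K k) : Prop :=
  (forall x y : X, f (vadd x y) = Kadd (f x) (f y)) /\
  (forall (a : K k) (x : X), f (vscal a x) = Kmul a (f x)) /\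
  (exists M, forall x : X, Kabs (f x) <= M * norm x).

Definition weak_cv {k} {X : NormedData k} (u : nat -> X) (l : X) : Prop :=
  forall f : X -> K k, is_bounded_functional f ->
    Un_cv (fun n => Kabs (Kadd (f (u n)) (Kopp (f l)))) 0.

Definition schur_property {k} (Y : NormedData k) : Prop :=
  forall (u : nat -> Y) (l : Y), weak_cv u l -> Un_cv (fun n => norm (vsub (u n) l)) 0.

Definition uniformly_convex {k} (X : NormedData k) : Prop :=
  forall eps, eps > 0 -> exists delta, delta > 0 /\
    forall x y : X, in_sphere x -> in_sphere y -> norm (vsub x y) >= eps ->
      norm (vscal (Kreal (/ 2)) (vadd x y)) <= 1 - delta.

Definition sBPBp {k} (X Y : NormedData k) : Prop :=
  forall eps, eps > 0 ->
  forall T : X -> Y, is_bounded_linear T -> has_opnorm T 1 ->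
  exists eta, eta > 0 /\
    forall x0 : X, in_sphere x0 -> norm (T x0) > 1 - eta ->
      exists x1 : X, in_sphere x1 /\ norm (T x1) = 1 /\ norm (vsub x1 x0) < eps.

Definition partial_sums_bounded (a : nat -> R) : Prop :=
  exists M, forall N, sum_f_R0 a N <= M.

Definition l1_pred {k} (x : nat -> K k) : Prop :=
  partial_sums_bounded (fun n => Kabs (x n)).
Definition l2_pred {k} (x : nat -> K k) : Prop :=
  partial_sums_bounded (fun n => Kabs (x n) ^ 2).

Record lseq (k : scalar_field) (P : (nat -> K k) -> Prop) := {
  lval :> nat -> K k;
  lprop : P lval
}.
Arguments lval {k P}.
Arguments lprop {k P}.

(* sup of the partial sums (= the sum of the series, for nonnegative terms) *)
Definition sup_partial_sums (a : nat -> R) (H : partial_sums_bounded a) : R.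
Proof.
  refine (proj1_sig (completeness (fun r => exists N, r = sum_f_R0 a N) _ _)).
  - destruct H as [M HM]. exists M. intros r [N ->]. apply HM.
  - exists (sum_f_R0 a 0). exists 0%nat. reflexivity.
Defined.

Lemma pointwise_sum_bounded (a b c : nat -> R) :
  (forall n, c n <= a n + b n) ->
  partial_sums_bounded a -> partial_sums_bounded b -> partial_sums_bounded c.
Proof.
  intros Hc [Ma Ha] [Mb Hb]. exists (Ma + Mb). intro N.
  apply Rle_trans with (sum_f_R0 (fun n => a n + b n) N).
  - apply sum_Rle. intros; apply Hc.
  - rewrite plus_sum. specialize (Ha N); specialize (Hb N); lra.
Qed.

Lemma scaled_sum_bounded (a c : nat -> R) (m : R) :
  0 <= m -> (forall n, c n <= a n * m) ->
  partial_sums_bounded a -> partial_sums_bounded c.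
Proof.
  intros Hm Hc [Ma Ha]. exists (Ma * m). intro N.
  apply Rle_trans with (sum_f_R0 (fun n => a n * m) N).
  - apply sum_Rle. intros; apply Hc.
  - rewrite <- scal_sum. rewrite Rmult_comm. apply Rmult_le_compat_r; auto.
Qed.

Lemma zero_sum_bounded (c : nat -> R) :
  (forall n, c n = 0) -> partial_sums_bounded c.
Proof.
  intro Hc. exists 0. intro N. induction N; simpl; rewrite Hc; lra.
Qed.

Definition l1_zero k : lseq k l1_pred.
Proof.
  refine {| lval := fun _ => K0 |}.
  apply zero_sum_bounded. intro; apply Kabs_K0.
Defined.
Definition l1_add k (x y : lseq k l1_pred) : lseq k l1_pred.
Proof.
  refine {| lval := fun n => Kadd (x n) (y n) |}.
  apply (pointwise_sum_bounded _ _ _ (fun n => Kabs_triang k (x n) (y n)))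
    ; [apply (lprop x) | apply (lprop y)].
Defined.
Definition l1_opp k (x : lseq k l1_pred) : lseq k l1_pred.
Proof.
  refine {| lval := fun n => Kopp (x n) |}.
  apply (scaled_sum_bounded (fun n => Kabs (x n)) _ 1); [lra | | apply (lprop x)].
  intro n. simpl. rewrite Kabs_opp. lra.
Defined.
Definition l1_scal k (a : K k) (x : lseq k l1_pred) : lseq k l1_pred.
Proof.
  refine {| lval := fun n => Kmul a (x n) |}.
  apply (scaled_sum_bounded (fun n => Kabs (x n)) _ (Kabs a)); [apply Kabs_pos | | apply (lprop x)].
  intro n. simpl. rewrite Kabs_mul. lra.
Defined.
Definition l1_norm k (x : lseq k l1_pred) : R :=
  sup_partial_sums _ (lprop x).

Definition ell1 (k : scalar_field) : NormedData k :=
  {| carrier := lseq k l1_pred; vzero := l1_zero k; vadd := l1_add k;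
     vopp := l1_opp k; vscal := l1_scal k; norm := l1_norm k |}.

Lemma sq_triang (u v w : R) : 0 <= u -> 0 <= v -> 0 <= w -> w <= u + v ->
  w ^ 2 <= 2 * u ^ 2 + 2 * v ^ 2.
Proof.
  intros. simpl. rewrite !Rmult_1_r.
  assert (w * w <= (u + v) * (u + v)) by (apply Rmult_le_compat; lra).
  assert (0 <= (u - v) * (u - v)) by apply Rle_0_sqr. nra.
Qed.

Definition l2_zero k : lseq k l2_pred.
Proof.
  refine {| lval := fun _ => K0 |}.
  apply zero_sum_bounded. intro; simpl. rewrite Kabs_K0. ring.
Defined.
Definition l2_add k (x y : lseq k l2_pred) : lseq k l2_pred.
Proof.
  refine {| lval := fun n => Kadd (x n) (y n) |}.
  apply (pointwise_sum_bounded (fun n => 2 * Kabs (x n) ^ 2) (fun n => 2 * Kabs (y n) ^ 2)).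
  - intro n. apply sq_triang; try apply Kabs_pos. apply Kabs_triang.
  - apply (scaled_sum_bounded (fun n => Kabs (x n) ^ 2) _ 2); [lra | | apply (lprop x)]. intro; lra.
  - apply (scaled_sum_bounded (fun n => Kabs (y n) ^ 2) _ 2); [lra | | apply (lprop y)]. intro; lra.
Defined.
Definition l2_opp k (x : lseq k l2_pred) : lseq k l2_pred.
Proof.
  refine {| lval := fun n => Kopp (x n) |}.
  apply (scaled_sum_bounded (fun n => Kabs (x n) ^ 2) _ 1); [lra | | apply (lprop x)].
  intro n. simpl. rewrite Kabs_opp. lra.
Defined.
Definition l2_scal k (a : K k) (x : lseq k l2_pred) : lseq k l2_pred.
Proof.
  refine {| lval := fun n => Kmul a (x n) |}.
  apply (scaled_sum_bounded (fun n => Kabs (x n) ^ 2) _ (Kabs a ^ 2)); [apply pow2_ge_0 | | apply (lprop x)].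
  intro n. simpl. rewrite Kabs_mul. lra.
Defined.
Definition l2_norm k (x : lseq k l2_pred) : R :=
  sqrt (sup_partial_sums _ (lprop x)).

Definition ell2 (k : scalar_field) : NormedData k :=
  {| carrier := lseq k l2_pred; vzero := l2_zero k; vadd := l2_add k;
     vopp := l2_opp k; vscal := l2_scal k; norm := l2_norm k |}.

(* Main.v *)
Require Import Defs.
From Stdlib Require Import Reals Lra Psatz Lia ZArith.
From Stdlib Require Import Classical ClassicalEpsilon FunctionalExtensionality ProofIrrelevance.
Open Scope R_scope.

Lemma Rabs_le_inv (a b : R) : Rabs a <= b -> - b <= a <= b.
Proof. intro H. pose proof (Rle_abs a). pose proof (Rle_abs (- a)). rewrite Rabs_Ropp in H1. lra. Qed.

Definition Kre {k} : K k -> R :=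
  match k with RealScalars => fun a : R => a | ComplexScalars => fun a : R * R => fst a end.
Definition Kim {k} : K k -> R :=
  match k with RealScalars => fun a : R => 0 | ComplexScalars => fun a : R * R => snd a end.
Definition Kmk {k} (x y : R) : K k :=
  match k with RealScalars => x | ComplexScalars => ((x, y) : R * R) end.

Lemma Kreal_mul k (a b : R) : Kmul (Kreal a) (Kreal b) = (Kreal (a * b) : K k).
Proof. destruct k; simpl. reflexivity. f_equal; ring. Qed.
Lemma Kreal_add k (a b : R) : Kadd (Kreal a) (Kreal b) = (Kreal (a + b) : K k).
Proof. destruct k; simpl. reflexivity. f_equal; ring. Qed.
Lemma Kreal_abs k (a : R) : Kabs (Kreal a : K k) = Rabs a.
Proof. destruct k; simpl. reflexivity.
  replace (a * a + 0 * 0) with (Rsqr a) by (unfold Rsqr; ring). apply sqrt_Rsqr_abs. Qed.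
Lemma Kreal1 k : (Kreal 1 : K k) = K1.
Proof. destruct k; reflexivity. Qed.
Lemma Kreal0 k : (Kreal 0 : K k) = K0.
Proof. destruct k; reflexivity. Qed.
Lemma Kadd_opp k (a : K k) : Kadd a (Kopp a) = K0.
Proof. destruct k; simpl. ring. destruct a; simpl; f_equal; ring. Qed.
Lemma Kmul_opp1 k (a : K k) : Kmul (Kopp K1) a = Kopp a.
Proof. destruct k; simpl. ring. destruct a; simpl; f_equal; ring. Qed.
Lemma Kabs_K1 k : Kabs (@K1 k) = 1.
Proof. rewrite <- Kreal1, Kreal_abs. apply Rabs_R1. Qed.
Lemma Kabs_opp1 k : Kabs (Kopp (@K1 k)) = 1.
Proof. rewrite Kabs_opp. apply Kabs_K1. Qed.
Lemma Kabs_eq0 k (a : K k) : Kabs a = 0 -> a = K0.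
Proof. destruct k; simpl; intro H.
  - destruct (Req_dec a 0); auto. exfalso. apply Rabs_no_R0 in H0. auto.
  - destruct a as [x y]; simpl in *.
    apply sqrt_eq_0 in H; [|nra]. f_equal; nra. Qed.
Lemma Kre_add k (a b : K k) : Kre (Kadd a b) = Kre a + Kre b.
Proof. destruct k; simpl; ring. Qed.
Lemma Kim_add k (a b : K k) : Kim (Kadd a b) = Kim a + Kim b.
Proof. destruct k; simpl; ring. Qed.
Lemma Kre_opp k (a : K k) : Kre (Kopp a) = - Kre a.
Proof. destruct k; simpl; ring. Qed.
Lemma Kim_opp k (a : K k) : Kim (Kopp a) = - Kim a.
Proof. destruct k; simpl; ring. Qed.
Lemma Kre_rmul k t (a : K k) : Kre (Kmul (Kreal t) a) = t * Kre a.
Proof. destruct k; simpl; ring. Qed.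
Lemma Kim_rmul k t (a : K k) : Kim (Kmul (Kreal t) a) = t * Kim a.
Proof. destruct k; simpl; ring. Qed.
Lemma Kre_le k (a : K k) : Rabs (Kre a) <= Kabs a.
Proof. destruct k; simpl. lra. destruct a as [x y]; simpl.
  rewrite <- sqrt_Rsqr_abs. apply sqrt_le_1_alt. unfold Rsqr. nra. Qed.
Lemma Kim_le k (a : K k) : Rabs (Kim a) <= Kabs a.
Proof. destruct k; simpl. rewrite Rabs_R0. apply Rabs_pos. destruct a as [x y]; simpl.
  rewrite <- sqrt_Rsqr_abs. apply sqrt_le_1_alt. unfold Rsqr. nra. Qed.
Lemma Kabs_le_re_im k (a : K k) : Kabs a <= Rabs (Kre a) + Rabs (Kim a).
Proof. destruct k; simpl. rewrite Rabs_R0; lra. destruct a as [x y]; simpl.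
  apply Rsqr_incr_0_var. 2: pose proof (Rabs_pos x); pose proof (Rabs_pos y); lra.
  unfold Rsqr. rewrite sqrt_sqrt by nra.
  pose proof (Rabs_pos x); pose proof (Rabs_pos y).
  assert (Rabs x * Rabs x = x * x) by (rewrite <- Rabs_mult; apply Rabs_right; nra).
  assert (Rabs y * Rabs y = y * y) by (rewrite <- Rabs_mult; apply Rabs_right; nra).
  nra. Qed.
Lemma Kre_mk k x y : Kre (@Kmk k x y) = x.
Proof. destruct k; reflexivity. Qed.
Lemma Kim_mk k x y : Kim (@Kmk k x y) = match k with RealScalars => 0 | _ => y end.
Proof. destruct k; reflexivity. Qed.
Lemma Kabs_sub_sym k (a b : K k) : Kabs (Kadd a (Kopp b)) = Kabs (Kadd b (Kopp a)).
Proof. rewrite <- Kabs_opp. f_equal. destruct k; simpl. ring. destruct a, b; simpl; f_equal; ring. Qed.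
Lemma Kabs_sub_tri k (a b c : K k) :
  Kabs (Kadd a (Kopp c)) <= Kabs (Kadd a (Kopp b)) + Kabs (Kadd b (Kopp c)).
Proof. replace (Kadd a (Kopp c)) with (Kadd (Kadd a (Kopp b)) (Kadd b (Kopp c))).
  apply Kabs_triang. destruct k; simpl. ring. destruct a, b, c; simpl; f_equal; ring. Qed.
Lemma Kabs_sub_eq0 k (a b : K k) : Kabs (Kadd a (Kopp b)) = 0 -> a = b.
Proof. intro H. apply Kabs_eq0 in H. destruct k; simpl in *. lra.
  destruct a, b; simpl in *. injection H; intros; f_equal; lra. Qed.
Lemma Kabs_self_sub k (a : K k) : Kabs (Kadd a (Kopp a)) = 0.
Proof. rewrite Kadd_opp. apply Kabs_K0. Qed.

Definition is_normed {k} (X : NormedData k) : Prop :=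
  (forall x y z : X, vadd x (vadd y z) = vadd (vadd x y) z) /\
  (forall x y : X, vadd x y = vadd y x) /\
  (forall x : X, vadd x vzero = x) /\
  (forall x : X, vadd x (vopp x) = vzero) /\
  (forall (a b : K k) (x : X), vscal a (vscal b x) = vscal (Kmul a b) x) /\
  (forall x : X, vscal K1 x = x) /\
  (forall (a : K k) (x y : X), vscal a (vadd x y) = vadd (vscal a x) (vscal a y)) /\
  (forall (a b : K k) (x : X), vscal (Kadd a b) x = vadd (vscal a x) (vscal b x)) /\
  (forall x : X, norm x = 0 -> x = vzero) /\
  (forall (a : K k) (x : X), norm (vscal a x) = Kabs a * norm x) /\
  (forall x y : X, norm (vadd x y) <= norm x + norm y).

Definition complete {k} (X : NormedData k) : Prop :=
  forall u : nat -> X,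
     (forall eps, eps > 0 -> exists N, forall m n, (m >= N)%nat -> (n >= N)%nat ->
        norm (vsub (u m) (u n)) < eps) ->
     exists l : X, forall eps, eps > 0 -> exists N, forall n, (n >= N)%nat ->
        norm (vsub (u n) l) < eps.

Lemma Banach_split {k} (X : NormedData k) : is_Banach X -> is_normed X /\ complete X.
Proof. intros (h1&h2&h3&h4&h5&h6&h7&h8&h9&h10&h11&h12).
  split. repeat split; auto. exact h12. Qed.

Ltac decomp H := let H' := fresh in pose proof H as H';
  destruct H' as (addA & addC & add0 & addN & scalA & scal1 & scalD & scalDK & n0 & nscal & ntri).

Section NS.
Context {k : scalar_field} {X : NormedData k} (H : is_normed X).

Lemma norm_eq0 (x : X) : norm x = 0 -> x = vzero.
Proof. decomp H. auto. Qed.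
Lemma norm_tri (x y : X) : norm (vadd x y) <= norm x + norm y.
Proof. decomp H. auto. Qed.
Lemma norm_scal a (x : X) : norm (vscal a x) = Kabs a * norm x.
Proof. decomp H. auto. Qed.
Lemma add0l (x : X) : vadd vzero x = x.
Proof. decomp H. rewrite addC; auto. Qed.
Lemma addNl (x : X) : vadd (vopp x) x = vzero.
Proof. decomp H. rewrite addC; auto. Qed.
Lemma scal0 (x : X) : vscal K0 x = vzero.
Proof. decomp H. apply n0. rewrite nscal, Kabs_K0. ring. Qed.
Lemma opp_scal (x : X) : vopp x = vscal (Kopp K1) x.
Proof. decomp H.
  assert (E : vadd x (vscal (Kopp K1) x) = vzero).
  { rewrite <- (scal1 x) at 1. rewrite <- scalDK, Kadd_opp. apply scal0. }
  rewrite <- (add0 (vopp x)). rewrite <- E, addA, addNl. apply add0l. Qed.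
Lemma norm_zero : norm (vzero : X) = 0.
Proof. decomp H. rewrite <- (scal0 vzero), nscal, Kabs_K0. ring. Qed.
Lemma norm_opp (x : X) : norm (vopp x) = norm x.
Proof. decomp H. rewrite opp_scal, nscal, Kabs_opp1. ring. Qed.
Lemma norm_nonneg (x : X) : 0 <= norm x.
Proof. decomp H. pose proof (ntri x (vopp x)). rewrite addN, norm_zero, norm_opp in H0. lra. Qed.
Lemma opp_add (x y : X) : vopp (vadd x y) = vadd (vopp x) (vopp y).
Proof. decomp H. rewrite !opp_scal. apply scalD. Qed.
Lemma opp_opp (x : X) : vopp (vopp x) = x.
Proof. decomp H. rewrite !opp_scal, scalA.
  replace (Kmul (Kopp K1) (Kopp K1)) with (@K1 k). apply scal1.
  destruct k; simpl. ring. f_equal; ring. Qed.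
Lemma opp_zero : vopp (vzero : X) = vzero.
Proof. rewrite opp_scal. rewrite <- (scal0 vzero). decomp H. rewrite scalA.
  f_equal. destruct k; simpl. ring. f_equal; ring. Qed.
Lemma vsub_self (x : X) : vsub x x = vzero.
Proof. decomp H. apply addN. Qed.
Lemma vsub_zero (x : X) : vsub x vzero = x.
Proof. decomp H. unfold vsub. rewrite opp_zero. apply add0. Qed.
Lemma vsub_opp (x y : X) : vsub y x = vopp (vsub x y).
Proof. decomp H. unfold vsub. rewrite opp_add, opp_opp. apply addC. Qed.
Lemma norm_sub_sym (x y : X) : norm (vsub x y) = norm (vsub y x).
Proof. rewrite (vsub_opp x y), norm_opp. reflexivity. Qed.
Lemma vsub_add (x y : X) : vadd (vsub x y) y = x.
Proof. decomp H. unfold vsub. rewrite <- addA, addNl. apply add0. Qed.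
Lemma vsub_chain (x y z : X) : vsub x z = vadd (vsub x y) (vsub y z).
Proof. decomp H. unfold vsub. rewrite addA. f_equal. rewrite <- addA, addNl, add0. reflexivity. Qed.
Lemma norm_sub_tri (x y z : X) : norm (vsub x z) <= norm (vsub x y) + norm (vsub y z).
Proof. decomp H. rewrite (vsub_chain x y z). apply ntri. Qed.
Lemma norm_rev_tri (x y : X) : Rabs (norm x - norm y) <= norm (vsub x y).
Proof. decomp H. pose proof (ntri (vsub x y) y). rewrite vsub_add in H0.
  pose proof (ntri (vsub y x) x). rewrite vsub_add in H1. rewrite norm_sub_sym in H1.
  apply Rabs_le. lra. Qed.
Lemma vsub_eq0 (x y : X) : norm (vsub x y) = 0 -> x = y.
Proof. decomp H. intro E. apply n0 in E. rewrite <- (vsub_add x y), E. apply add0l. Qed.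
Lemma sub_add_add (a b c d : X) : vsub (vadd a b) (vadd c d) = vadd (vsub a c) (vsub b d).
Proof. decomp H. unfold vsub. rewrite opp_add.
  rewrite !addA. f_equal. rewrite <- !addA. f_equal. apply addC. Qed.

Definition sc (t : R) (x : X) : X := vscal (Kreal t) x.
Lemma sc_sc t u (x : X) : sc t (sc u x) = sc (t * u) x.
Proof. decomp H. unfold sc. rewrite scalA, Kreal_mul. reflexivity. Qed.
Lemma sc_add t (x y : X) : sc t (vadd x y) = vadd (sc t x) (sc t y).
Proof. decomp H. apply scalD. Qed.
Lemma sc_addR t u (x : X) : sc (t + u) x = vadd (sc t x) (sc u x).
Proof. decomp H. unfold sc. rewrite <- Kreal_add. apply scalDK. Qed.
Lemma sc1 (x : X) : sc 1 x = x.
Proof. decomp H. unfold sc. rewrite Kreal1. apply scal1. Qed.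
Lemma sc0 (x : X) : sc 0 x = vzero.
Proof. unfold sc. rewrite Kreal0. apply scal0. Qed.
Lemma norm_sc t (x : X) : norm (sc t x) = Rabs t * norm x.
Proof. decomp H. unfold sc. rewrite nscal, Kreal_abs. reflexivity. Qed.
Lemma sc_opp t (x : X) : sc t (vopp x) = vopp (sc t x).
Proof. decomp H. unfold sc. rewrite !opp_scal, !scalA. f_equal.
  destruct k; simpl. ring. f_equal; ring. Qed.
Lemma sc_sub t (x y : X) : vsub (sc t x) (sc t y) = sc t (vsub x y).
Proof. unfold vsub. rewrite sc_add, sc_opp. reflexivity. Qed.
Lemma sub_sc (t : R) (x : X) : vsub x (sc t x) = sc (1 - t) x.
Proof. decomp H. unfold vsub. rewrite <- sc_opp.
  replace (1 - t) with (1 + (- t)) by ring. rewrite sc_addR, sc1. f_equal.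
  rewrite sc_opp. unfold sc. rewrite !opp_scal, scalA. f_equal.
  destruct k; simpl. ring. f_equal; ring. Qed.

Definition mid (x y : X) : X := sc (/2) (vadd x y).
Lemma norm_mid_le (x y : X) : norm (mid x y) <= (norm x + norm y) / 2.
Proof. decomp H. unfold mid. rewrite norm_sc. rewrite Rabs_right by lra.
  pose proof (ntri x y). lra. Qed.
Lemma mid_same (x : X) : mid x x = x.
Proof. unfold mid. rewrite <- (sc1 x) at 1 2. rewrite <- sc_addR, sc_sc.
  replace (/2 * (1+1)) with 1 by field. apply sc1. Qed.
Lemma mid_diff (x y x' y' : X) :
  norm (vsub (mid x y) (mid x' y')) <= (norm (vsub x x') + norm (vsub y y')) / 2.
Proof. decomp H. unfold mid. rewrite sc_sub, norm_sc, sub_add_add. rewrite Rabs_right by lra.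
  pose proof (ntri (vsub x x') (vsub y y')). lra. Qed.
Lemma norm_mid_ge (x y : X) : norm (mid x y) >= norm y - norm (vsub x y) / 2.
Proof. pose proof (mid_diff x y y y). rewrite mid_same, vsub_self, norm_zero in H0.
  pose proof (norm_rev_tri (mid x y) y). apply Rabs_le_inv in H1. lra. Qed.
End NS.

Section Lin.
Context {k : scalar_field} {X Y : NormedData k} (HX : is_normed X) (HY : is_normed Y).

Lemma lin_sc (T : X -> Y) : is_linear T -> forall t x, T (sc t x) = sc t (T x).
Proof. intros [_ L] t x. unfold sc. apply L. Qed.
Lemma lin_zero (T : X -> Y) : is_linear T -> T vzero = vzero.
Proof. intros [A L]. rewrite <- (scal0 HX vzero), L. apply (scal0 HY). Qed.
Lemma lin_opp (T : X -> Y) : is_linear T -> forall x, T (vopp x) = vopp (T x).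
Proof. intros [A L] x. rewrite (opp_scal HX), (opp_scal HY). apply L. Qed.
Lemma lin_sub (T : X -> Y) : is_linear T -> forall x y, T (vsub x y) = vsub (T x) (T y).
Proof. intros L x y. unfold vsub. pose proof (lin_opp T L y). destruct L as [A S]. rewrite A. f_equal.
  auto. Qed.
Lemma lin_add (T : X -> Y) : is_linear T -> forall x y, T (vadd x y) = vadd (T x) (T y).
Proof. intros [A _]. auto. Qed.
Lemma lin_mid (T : X -> Y) : is_linear T -> forall x y, T (mid x y) = mid (T x) (T y).
Proof. intros L x y. unfold mid. rewrite lin_sc by auto. f_equal. apply lin_add; auto. Qed.

Lemma opnorm_le (T : X -> Y) : is_linear T -> has_opnorm T 1 -> forall x, norm (T x) <= norm x.
Proof. intros L [Hub _] x.
  destruct (Req_dec (norm x) 0) as [E|E].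
  - apply (norm_eq0 HX) in E. subst x. rewrite lin_zero by auto. rewrite (norm_zero HY), (norm_zero HX). lra.
  - pose proof (norm_nonneg HX x).
    assert (Hz : norm (sc (/ norm x) x) <= 1).
    { rewrite (norm_sc HX), Rabs_right. right; field; auto. left; apply Rinv_0_lt_compat; lra. }
    specialize (Hub (norm (T (sc (/ norm x) x))) (ex_intro _ _ (conj Hz eq_refl))).
    rewrite lin_sc, (norm_sc HY), Rabs_right in Hub by (auto; left; apply Rinv_0_lt_compat; lra).
    pose proof (norm_nonneg HY (T x)).
    apply Rmult_le_compat_l with (r := norm x) in Hub; [|lra].
    rewrite <- Rmult_assoc, Rinv_r, Rmult_1_l in Hub; lra.
Qed.
End Lin.

Section Fun.
Context {k : scalar_field} {X : NormedData k} (HX : is_normed X).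

Lemma f_sc (f : X -> K k) : is_bounded_functional f -> forall t x, f (sc t x) = Kmul (Kreal t) (f x).
Proof. intros (A&S&_) t x. apply S. Qed.
Lemma f_opp (f : X -> K k) : is_bounded_functional f -> forall x, f (vopp x) = Kopp (f x).
Proof. intros (A&S&_) x. rewrite (opp_scal HX), S. apply Kmul_opp1. Qed.
Lemma f_sub (f : X -> K k) : is_bounded_functional f -> forall x y, f (vsub x y) = Kadd (f x) (Kopp (f y)).
Proof. intros F x y. unfold vsub. pose proof (f_opp f F y). destruct F as (A&_&_). rewrite A. f_equal; auto. Qed.
Lemma f_bound (f : X -> K k) : is_bounded_functional f -> exists M, M >= 0 /\ forall x, Kabs (f x) <= M * norm x.
Proof. intros (_&_&M&HM). exists (Rmax M 0). split. pose proof (Rmax_r M 0); lra.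
  intro x. eapply Rle_trans. apply HM. apply Rmult_le_compat_r. apply (norm_nonneg HX). apply Rmax_l. Qed.
End Fun.

Lemma comp_functional {k} {X Y : NormedData k} (HX : is_normed X) (HY : is_normed Y) (T : X -> Y) (f : Y -> K k) :
  is_bounded_linear T -> is_bounded_functional f -> is_bounded_functional (fun x => f (T x)).
Proof. intros [[TA TS] [MT HMT]] F. pose proof (f_bound HY f F) as (Mf & HMf0 & HMf).
  destruct F as (FA & FS & _). split; [|split].
  - intros x y. rewrite TA. apply FA.
  - intros a x. rewrite TS. apply FS.
  - exists (Mf * MT). intro x. eapply Rle_trans. apply HMf. rewrite Rmult_assoc.
    apply Rmult_le_compat_l; auto. lra.
Qed.

Section UC.
Context {k : scalar_field} {X : NormedData k} (HX : is_normed X) (U : uniformly_convex X).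

Lemma UCball : forall eps, eps > 0 -> exists delta, delta > 0 /\
  forall x y : X, norm x <= 1 -> norm y <= 1 -> norm (mid x y) >= 1 - delta -> norm (vsub x y) <= eps.
Proof. intros eps He.
  destruct (U (eps/2)) as (d0 & Hd0 & HU); [lra|].
  exists (Rmin (d0/4) (Rmin (eps/8) (1/4))). split.
  { repeat apply Rmin_pos; lra. }
  intros x y Hx Hy Hm. set (d := Rmin (d0/4) (Rmin (eps/8) (1/4))) in *.
  assert (d1 : d <= d0/4) by apply Rmin_l.
  assert (d2 : d <= eps/8) by (eapply Rle_trans; [apply Rmin_r| apply Rmin_l]).
  assert (d3 : d <= 1/4) by (eapply Rle_trans; [apply Rmin_r| apply Rmin_r]).
  pose proof (norm_mid_le HX x y).
  set (nx := norm x) in *. set (ny := norm y) in *.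
  assert (Hnx : nx >= 1 - 2 * d) by lra. assert (Hny : ny >= 1 - 2 * d) by lra.
  set (x' := sc (/ nx) x). set (y' := sc (/ ny) y).
  assert (Ex : norm (vsub x x') <= 2 * d).
  { unfold x'. rewrite (sub_sc HX), (norm_sc HX). fold nx.
    rewrite Rabs_left1. replace (- (1 - / nx) * nx) with (1 - nx) by (field; lra). lra.
    assert (/ nx >= 1). { replace 1 with (/1) by field. apply Rle_ge, Rinv_le_contravar; lra. } lra. }
  assert (Ey : norm (vsub y y') <= 2 * d).
  { unfold y'. rewrite (sub_sc HX), (norm_sc HX). fold ny.
    rewrite Rabs_left1. replace (- (1 - / ny) * ny) with (1 - ny) by (field; lra). lra.
    assert (/ ny >= 1). { replace 1 with (/1) by field. apply Rle_ge, Rinv_le_contravar; lra. } lra. }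
  assert (Sx : in_sphere x'). { unfold in_sphere, x'. rewrite (norm_sc HX). fold nx.
    rewrite Rabs_right. field. lra. left; apply Rinv_0_lt_compat; lra. }
  assert (Sy : in_sphere y'). { unfold in_sphere, y'. rewrite (norm_sc HX). fold ny.
    rewrite Rabs_right. field. lra. left; apply Rinv_0_lt_compat; lra. }
  assert (Hm' : norm (mid x' y') > 1 - d0).
  { pose proof (mid_diff HX x y x' y'). pose proof (norm_rev_tri HX (mid x y) (mid x' y')).
    apply Rabs_le_inv in H1. lra. }
  assert (Hxy' : norm (vsub x' y') < eps / 2).
  { destruct (Rlt_or_le (norm (vsub x' y')) (eps/2)) as [h|h]; auto.
    specialize (HU x' y' Sx Sy (Rle_ge _ _ h)). unfold mid, sc in Hm'. lra. }
  pose proof (norm_sub_tri HX x x' y). pose proof (norm_sub_tri HX x' y' y).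
  rewrite (norm_sub_sym HX y' y) in H1. lra.
Qed.

Lemma mid_sc (t : R) (x y : X) : mid (sc t x) (sc t y) = sc t (mid x y).
Proof. unfold mid. rewrite <- (sc_add HX), !(sc_sc HX). f_equal. ring. Qed.

Lemma UCsc : forall eps, eps > 0 -> exists delta, delta > 0 /\
  forall rho, rho > 0 -> forall x y : X, norm x <= rho -> norm y <= rho ->
    norm (mid x y) >= rho * (1 - delta) -> norm (vsub x y) <= rho * eps.
Proof. intros eps He. destruct (UCball eps He) as (d & Hd & HB). exists d. split; auto.
  intros rho Hr x y Hx Hy Hm.
  assert (Hir : / rho > 0) by (apply Rinv_0_lt_compat; lra).
  specialize (HB (sc (/ rho) x) (sc (/rho) y)).
  rewrite (sc_sub HX), mid_sc, !(norm_sc HX), Rabs_right in HB by lra.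
  assert (norm (vsub x y) * / rho <= eps).
  { rewrite Rmult_comm. apply HB.
    - apply Rmult_le_reg_l with rho; auto. rewrite <- Rmult_assoc, Rinv_r; lra.
    - apply Rmult_le_reg_l with rho; auto. rewrite <- Rmult_assoc, Rinv_r; lra.
    - apply Rle_ge, Rmult_le_reg_l with rho; auto. rewrite <- Rmult_assoc, Rinv_r; lra. }
  apply Rmult_le_compat_r with (r := rho) in H; [|lra].
  rewrite Rmult_assoc, Rinv_l, Rmult_1_r in H; lra.
Qed.
End UC.

Lemma fchoice {A B : Type} (P : A -> B -> Prop) : (forall a, exists b, P a b) -> exists f, forall a, P a (f a).
Proof. intro H. exists (fun a => proj1_sig (constructive_indefinite_description _ (H a))).
  intro a. exact (proj2_sig (constructive_indefinite_description _ (H a))). Qed.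

Lemma inf_exists (A : R -> Prop) : (exists x, A x) -> (forall x, A x -> 0 <= x) ->
  exists d, (forall x, A x -> d <= x) /\ (forall e, e > 0 -> exists x, A x /\ x < d + e).
Proof. intros [x0 Hx0] Hpos.
  destruct (completeness (fun y => A (- y))) as [m [Hub Hl]].
  { exists 0. intros y Hy. apply Hpos in Hy. lra. }
  { exists (- x0). rewrite Ropp_involutive. auto. }
  exists (- m). split.
  - intros x Hx. assert (- x <= m) by (apply Hub; rewrite Ropp_involutive; auto). lra.
  - intros e He. apply NNPP. intro Hn.
    assert (m <= m - e); [|lra].
    apply Hl. intros y Hy. destruct (Rle_or_lt y (m - e)); auto. exfalso. apply Hn.
    exists (- y). split; auto. lra.
Qed.

Lemma sup_exists (A : R -> Prop) (B : R) : (exists x, A x) -> (forall x, A x -> x <= B) ->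
  exists s, (forall x, A x -> x <= s) /\ s <= B /\ (forall e, e > 0 -> exists x, A x /\ s - e < x).
Proof. intros Hne Hb. destruct (completeness A) as [s [Hub Hl]].
  { exists B. intros x Hx; auto. } auto.
  exists s. split; auto. split. apply Hl. intros x Hx; auto.
  intros e He. apply NNPP. intro Hn. assert (s <= s - e); [|lra].
  apply Hl. intros y Hy. destruct (Rle_or_lt y (s - e)); auto. exfalso. apply Hn. exists y; auto.
Qed.

Lemma archi (e : R) : e > 0 -> exists N : nat, / (INR N + 1) < e.
Proof. intro He. destruct (archimed (/ e)) as [H1 _].
  assert (0 <= IZR (up (/ e))). { left. apply Rlt_trans with (/ e); auto. apply Rinv_0_lt_compat; lra. }
  exists (Z.to_nat (up (/ e))). rewrite INR_IZR_INZ, Z2Nat.id by (apply le_IZR; lra).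
  apply Rmult_lt_reg_l with (IZR (up (/ e)) + 1); [lra|].
  rewrite Rinv_r by lra. apply Rmult_lt_reg_l with (/ e). apply Rinv_0_lt_compat; lra.
  replace (/ e * ((IZR (up (/ e)) + 1) * e)) with (IZR (up (/ e)) + 1) by (field; lra). lra.
Qed.

Lemma inv_Sn_le (n m : nat) : (n <= m)%nat -> / (INR m + 1) <= / (INR n + 1).
Proof. intro H. apply Rinv_le_contravar. pose proof (pos_INR n); lra. apply le_INR in H; lra. Qed.
Lemma inv_Sn_pos (n : nat) : 0 < / (INR n + 1).
Proof. apply Rinv_0_lt_compat. pose proof (pos_INR n); lra. Qed.

Lemma not_Un_cv_0 (a : nat -> R) : ~ Un_cv a 0 -> exists eps, eps > 0 /\ forall N, exists n, (n >= N)%nat /\ eps <= Rabs (a n).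
Proof. intro H. apply NNPP. intro H'. apply H. intros eps He.
  apply NNPP. intro H2. apply H'. exists eps. split; auto. intro N.
  apply NNPP. intro H3. apply H2. exists N. intros n Hn. unfold R_dist. rewrite Rminus_0_r.
  destruct (Rlt_or_le (Rabs (a n)) eps); auto. exfalso. apply H3. exists n; auto. Qed.

Lemma inf_or (P Q : nat -> Prop) : (forall N, exists n, (n >= N)%nat /\ (P n \/ Q n)) ->
  (forall N, exists n, (n >= N)%nat /\ P n) \/ (forall N, exists n, (n >= N)%nat /\ Q n).
Proof. intro H. apply NNPP. intro Hn. apply not_or_and in Hn. destruct Hn as [H1 H2].
  apply not_all_ex_not in H1. apply not_all_ex_not in H2. destruct H1 as [N1 H1]. destruct H2 as [N2 H2].
  destruct (H (max N1 N2)) as (n & Hn & [Hp|Hq]).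
  - apply H1. exists n. split; auto. lia.
  - apply H2. exists n. split; auto. lia. Qed.

Section Hull.
Context {k : scalar_field} {X : NormedData k} (HX : is_normed X).

Definition closedS (S : X -> Prop) := forall x, (forall eps, eps > 0 -> exists y, S y /\ norm (vsub x y) < eps) -> S x.
Definition mconv (S : X -> Prop) := forall x y, S x -> S y -> S (mid x y).
Definition hull (A : X -> Prop) : X -> Prop :=
  fun p => forall S, closedS S -> mconv S -> (forall a, A a -> S a) -> S p.

Lemma hull_closed A : closedS (hull A).
Proof. intros x Hx S Sc Sm SA. apply Sc. intros eps He. destruct (Hx eps He) as (y & Hy & Hd).
  exists y. split; auto. apply Hy; auto. Qed.
Lemma hull_mconv A : mconv (hull A).
Proof. intros x y Hx Hy S Sc Sm SA. apply Sm; [apply Hx|apply Hy]; auto. Qed.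
Lemma hull_incl A a : A a -> hull A a.
Proof. intros Ha S _ _ SA. auto. Qed.
Lemma hull_min A S : closedS S -> mconv S -> (forall a, A a -> S a) -> forall p, hull A p -> S p.
Proof. intros Sc Sm SA p Hp. apply Hp; auto. Qed.
Lemma hull_mono (A B : X -> Prop) : (forall a, A a -> B a) -> forall p, hull A p -> hull B p.
Proof. intros AB p Hp S Sc Sm SB. apply Hp; auto. Qed.

Lemma ball_closed (r : R) : closedS (fun x => norm x <= r).
Proof. intros x Hx. apply Rnot_lt_le. intro Hlt. destruct (Hx (norm x - r)) as (y & Hy & Hd); [lra|].
  pose proof (norm_rev_tri HX x y). apply Rabs_le_inv in H. lra. Qed.
Lemma ball_mconv (r : R) : mconv (fun x => norm x <= r).
Proof. intros x y Hx Hy. pose proof (norm_mid_le HX x y). lra. Qed.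
End Hull.

Section Nest.
Context {k : scalar_field} {X : NormedData k} (HX : is_normed X) (HC : complete X) (HU : uniformly_convex X).

Lemma norm_vsub_le (x y : X) : norm (vsub x y) <= norm x + norm y.
Proof. unfold vsub. rewrite <- (norm_opp HX y). apply (norm_tri HX). Qed.

Lemma nest (C : nat -> X -> Prop) (B : R) :
  (forall n, closedS (C n)) -> (forall n, mconv (C n)) -> (forall n x, C (S n) x -> C n x) ->
  (forall n, exists p, C n p /\ norm p <= B) ->
  exists p, (forall n, C n p) /\ forall q, (forall n, C n q) -> norm p <= norm q.
Proof. intros Ccl Ccv Cdec Cne.
  assert (mono : forall n m, (n <= m)%nat -> forall x, C m x -> C n x).
  { intros n m Hnm. induction Hnm; auto. }
  destruct (fchoice (fun n d => (forall x, (exists p, C n p /\ x = norm p) -> d <= x) /\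
      (forall e, e > 0 -> exists x, (exists p, C n p /\ x = norm p) /\ x < d + e))) as [d Hd].
  { intro n. apply inf_exists. destruct (Cne n) as (p & Hp & _). exists (norm p), p; auto.
    intros x (p & _ & ->). apply (norm_nonneg HX). }
  assert (dlow : forall n p, C n p -> d n <= norm p). { intros n p Hp. apply (proj1 (Hd n)). exists p; auto. }
  assert (dapp : forall n e, e > 0 -> exists p, C n p /\ norm p < d n + e).
  { intros n e He. destruct (proj2 (Hd n) e He) as (x & (p & Hp & ->) & Hx). exists p; auto. }
  clear Hd.
  assert (dmono : forall n m, (n <= m)%nat -> d n <= d m).
  { intros n m Hnm. apply Rnot_lt_le. intro Hlt. destruct (dapp m (d n - d m)) as (p & Hp & Hn); [lra|].
    apply (mono n m Hnm) in Hp. apply dlow in Hp. lra. }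
  assert (dpos : forall n, 0 <= d n).
  { intro n. apply Rnot_lt_le. intro Hlt. destruct (dapp n (- d n)) as (p & Hp & Hn); [lra|].
    pose proof (norm_nonneg HX p). lra. }
  assert (dB : forall n, d n <= B).
  { intro n. destruct (Cne n) as (p & Hp & HpB). apply dlow in Hp. lra. }
  destruct (sup_exists (fun x => exists n, x = d n) B) as (dd & Hdd1 & HddB & Hdd2).
  { exists (d 0%nat), 0%nat; auto. } { intros x (n & ->). auto. }
  assert (dle : forall n, d n <= dd). { intro n. apply Hdd1. exists n; auto. }
  assert (dd0 : 0 <= dd). { pose proof (dle 0%nat). pose proof (dpos 0%nat). lra. }
  destruct (fchoice (fun n p => C n p /\ norm p < d n + / (INR n + 1))) as [pp Hpp].
  { intro n. apply dapp. apply inv_Sn_pos. }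
  assert (Cauchy : forall eps, eps > 0 -> exists N, forall m n, (m >= N)%nat -> (n >= N)%nat ->
        norm (vsub (pp m) (pp n)) < eps).
  { intros eps He. destruct (Rle_lt_dec dd 0) as [Hd0|Hd0].
    - destruct (archi (eps/2)) as [N HN]; [lra|]. exists N. intros m n Hm Hn.
      assert (d m = 0) by (pose proof (dle m); pose proof (dpos m); lra).
      assert (d n = 0) by (pose proof (dle n); pose proof (dpos n); lra).
      pose proof (proj2 (Hpp m)). pose proof (proj2 (Hpp n)).
      pose proof (inv_Sn_le _ _ Hm). pose proof (inv_Sn_le _ _ Hn).
      pose proof (norm_vsub_le (pp m) (pp n)). lra.
    - destruct (UCsc HX HU (eps / (4 * dd))) as (dl & Hdl & HUC).
      { apply Rdiv_lt_0_compat; lra. }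
      set (g := Rmin (dd * dl / 2) dd).
      assert (g1 : g <= dd * dl / 2) by apply Rmin_l. assert (g2 : g <= dd) by apply Rmin_r.
      assert (g0 : g > 0). { apply Rmin_pos; [|lra]. apply Rdiv_lt_0_compat; [nra|lra]. }
      destruct (archi g g0) as [N1 HN1].
      destruct (Hdd2 g g0) as (x & (N0 & ->) & HN0).
      assert (inner : forall a b, (a >= max N0 N1)%nat -> (b >= a)%nat -> norm (vsub (pp a) (pp b)) <= eps / 2).
      { intros a b Ha Hb.
        destruct (Hpp a) as [Ca Na]. destruct (Hpp b) as [Cb Nb].
        pose proof (mono a b Hb _ Cb) as Cba.
        pose proof (inv_Sn_le N1 a ltac:(lia)). pose proof (inv_Sn_le N1 b ltac:(lia)).
        pose proof (dmono N0 a ltac:(lia)). pose proof (dle a). pose proof (dle b).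
        assert (Hm : norm (mid (pp a) (pp b)) >= (dd + g) * (1 - dl)).
        { pose proof (dlow a _ (Ccv a _ _ Ca Cba)). assert (g * dl >= 0) by nra. nra. }
        pose proof (HUC (dd + g) ltac:(lra) (pp a) (pp b) ltac:(lra) ltac:(lra) Hm).
        assert ((dd + g) * (eps / (4 * dd)) <= eps / 2).
        { apply Rle_trans with (2 * dd * (eps / (4 * dd))). apply Rmult_le_compat_r.
          left; apply Rdiv_lt_0_compat; lra. lra. right; field; lra. }
        lra. }
      exists (max N0 N1). intros m n Hm Hn. destruct (le_ge_dec m n) as [Hmn|Hmn].
      + pose proof (inner m n Hm Hmn). lra.
      + pose proof (inner n m Hn Hmn). rewrite (norm_sub_sym HX). lra. }
  destruct (HC pp Cauchy) as [l Hl].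
  exists l. split.
  - intro n. apply Ccl. intros eps He. destruct (Hl eps He) as [N HN].
    exists (pp (max n N)). split. apply (mono n (max n N)); [lia|]. apply Hpp.
    rewrite (norm_sub_sym HX). apply HN. lia.
  - assert (Hle : norm l <= dd).
    { apply Rnot_lt_le. intro Hlt. set (eta := norm l - dd).
      destruct (Hl (eta/2)) as [N HN]; [unfold eta; lra|].
      destruct (archi (eta/2)) as [N' HN']; [unfold eta; lra|].
      set (m := max N N'). pose proof (HN m ltac:(unfold m; lia)).
      pose proof (norm_rev_tri HX l (pp m)). rewrite (norm_sub_sym HX) in H0. apply Rabs_le_inv in H0.
      pose proof (proj2 (Hpp m)). pose proof (dle m). pose proof (inv_Sn_le N' m ltac:(unfold m; lia)).
      unfold eta in *. lra. }
    intros q Hq. apply Rle_trans with dd; auto. apply Rnot_lt_le. intro Hlt.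
    destruct (Hdd2 (dd - norm q)) as (x & (n & ->) & Hx); [lra|].
    pose proof (dlow n q (Hq n)). lra.
Qed.

Lemma uniq_min (S : X -> Prop) p q : mconv S -> S p -> S q ->
  (forall z, S z -> norm p <= norm z) -> norm q <= norm p -> p = q.
Proof. intros Sm Sp Sq Hmin Hq.
  pose proof (Hmin q Sq). pose proof (Hmin _ (Sm _ _ Sp Sq)) as Hmid.
  destruct (Rle_lt_dec (norm p) 0) as [H0|H0].
  - pose proof (norm_nonneg HX p). pose proof (norm_nonneg HX q).
    rewrite (norm_eq0 HX p), (norm_eq0 HX q); auto; lra.
  - apply (vsub_eq0 HX). apply Rle_antisym; [|apply (norm_nonneg HX)].
    apply Rnot_lt_le. intro Hlt.
    destruct (UCsc HX HU (norm (vsub p q) / (2 * norm p))) as (dl & Hdl & HUC).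
    { apply Rdiv_lt_0_compat; lra. }
    pose proof (HUC (norm p) H0 p q ltac:(lra) ltac:(lra) ltac:(nra)).
    replace (norm p * (norm (vsub p q) / (2 * norm p))) with (norm (vsub p q) / 2) in H1 by (field; lra).
    lra.
Qed.
End Nest.

Definition infI (I : nat -> Prop) := forall N, exists n, (n >= N)%nat /\ I n.
Definition subf (J I : nat -> Prop) := exists N, forall m, (m >= N)%nat -> J m -> I m.

Fixpoint chain (F : ((nat -> Prop) * nat) -> (nat -> Prop)) (j : nat) : nat -> Prop :=
  match j with O => fun _ => True | S j' => F (chain F j', j') end.
Fixpoint diag (G : ((nat -> Prop) * nat) -> nat) (Ich : nat -> nat -> Prop) (j : nat) : nat :=
  match j with O => G (Ich O, O) | S j' => G (Ich (S j'), S (diag G Ich j')) end.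

Section WSC.
Context {k : scalar_field} {X : NormedData k} (HX : is_normed X) (HC : complete X) (HU : uniformly_convex X).
Context (u : nat -> X) (Hu : forall n, norm (u n) <= 1).

Definition tl (I : nat -> Prop) (n : nat) : X -> Prop := fun a => exists m, (m >= n)%nat /\ I m /\ a = u m.
Definition DD (I : nat -> Prop) : X -> Prop := fun p => forall n, hull (tl I n) p.

Lemma DD_mono J I p : subf J I -> DD J p -> DD I p.
Proof. intros [N HN] Hp n. apply (hull_mono (tl J (max n N))). 2: apply Hp.
  intros a (m & Hm & Jm & ->). exists m. repeat split; auto; try lia. apply HN; auto; lia. Qed.
Lemma DD_mconv I : mconv (DD I).
Proof. intros x y Hx Hy n. apply hull_mconv; auto. Qed.
Lemma DD_ball I p : DD I p -> norm p <= 1.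
Proof. intro Hp. apply (hull_min (tl I 0) (fun x => norm x <= 1)).
  apply (ball_closed HX). apply (ball_mconv HX). intros a (m & _ & _ & ->). auto. apply Hp. Qed.
Lemma DD_np I : infI I -> exists p, DD I p /\ forall q, DD I q -> norm p <= norm q.
Proof. intro HI. apply (nest HX HC HU (fun n => hull (tl I n)) 1).
  - intro; apply hull_closed. - intro; apply hull_mconv.
  - intros n x. apply hull_mono. intros a (m & Hm & Im & ->). exists m; repeat split; auto; lia.
  - intro n. destruct (HI n) as (m & Hm & Im). exists (u m). split; auto.
    apply hull_incl. exists m; auto.
Qed.

Definition rr (I : nat -> Prop) : R :=
  epsilon (inhabits 0) (fun r => exists p, DD I p /\ norm p = r /\ forall q, DD I q -> r <= norm q).
Lemma rr_spec I : infI I -> exists p, DD I p /\ norm p = rr I /\ forall q, DD I q -> rr I <= norm q.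
Proof. intro HI. unfold rr. apply epsilon_spec. destruct (DD_np I HI) as (p & Hp & Hm).
  exists (norm p), p. auto. Qed.
Lemma rr_mono J I : infI J -> infI I -> subf J I -> rr I <= rr J.
Proof. intros HJ HI Hs. destruct (rr_spec J HJ) as (p & Hp & Hn & _).
  destruct (rr_spec I HI) as (_ & _ & _ & Hm). rewrite <- Hn. apply Hm. apply (DD_mono J); auto. Qed.
Lemma rr_le1 I : infI I -> rr I <= 1.
Proof. intro HI. destruct (rr_spec I HI) as (p & Hp & Hn & _). rewrite <- Hn. apply (DD_ball I); auto. Qed.

Lemma step I e : infI I -> e > 0 -> exists J, infI J /\ (forall m, J m -> I m) /\
  forall J', infI J' -> (forall m, J' m -> I m) -> rr J' <= rr J + e.
Proof. intros HI He.
  destruct (sup_exists (fun x => exists J, infI J /\ (forall m, J m -> I m) /\ x = rr J) 1) as (s & Hs1 & _ & Hs2).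
  { exists (rr I), I. auto. } { intros x (J & HJ & _ & ->). apply rr_le1; auto. }
  destruct (Hs2 e He) as (x & (J & HJ & HJI & ->) & Hx). exists J. repeat split; auto.
  intros J' HJ' HJ'I. assert (rr J' <= s) by (apply Hs1; exists J'; auto). lra. Qed.

Lemma wsc : exists e : nat -> nat, (forall j, (e j < e (S j))%nat) /\ exists p, norm p <= 1 /\
  forall g, is_bounded_functional g -> Un_cv (fun j => Kabs (Kadd (g (u (e j))) (Kopp (g p)))) 0.
Proof.
  destruct (fchoice (fun (pr : (nat -> Prop) * nat) J => infI (fst pr) -> infI J /\ (forall m, J m -> fst pr m) /\
     forall J', infI J' -> (forall m, J' m -> fst pr m) -> rr J' <= rr J + / (INR (snd pr) + 1))) as [F HF].
  { intros [I j]. simpl. destruct (classic (infI I)) as [HI|HI].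
    - destruct (step I (/ (INR j + 1)) HI (inv_Sn_pos j)) as (J & H1 & H2 & H3). exists J. auto.
    - exists I. intro; contradiction. }
  set (Ich := chain F).
  assert (ch_inf : forall j, infI (Ich j)).
  { intro j; induction j as [|j IH].
    - intro N. exists N. split; [lia|]. unfold Ich; simpl; constructor.
    - simpl. apply (HF (Ich j, j)); auto. }
  assert (ch_dec : forall j m, Ich (S j) m -> Ich j m).
  { intros j m Hm. exact (proj1 (proj2 (HF (Ich j, j) (ch_inf j))) m Hm). }
  assert (ch_mono : forall j i m, (j <= i)%nat -> Ich i m -> Ich j m).
  { intros j i m Hji. induction Hji; auto. }
  destruct (fchoice (fun (pr : (nat -> Prop) * nat) n => infI (fst pr) -> (n >= snd pr)%nat /\ fst pr n)) as [G HG].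
  { intros [I N]. simpl. destruct (classic (infI I)) as [HI|HI].
    - destruct (HI N) as (n & Hn & In). exists n; auto.
    - exists O. intro; contradiction. }
  set (e := diag G Ich).
  assert (e_in : forall j, Ich j (e j)).
  { intro j. unfold e. destruct j; simpl.
    - exact (proj2 (HG (Ich O, O) (ch_inf O))).
    - exact (proj2 (HG (Ich (S j), S (diag G Ich j)) (ch_inf (S j)))). }
  assert (e_S : forall j, (e j < e (S j))%nat).
  { intro j. unfold e. simpl. pose proof (HG (Ich (S j), S (diag G Ich j)) (ch_inf (S j))). simpl in H. lia. }
  assert (e_mono : forall i j, (i < j)%nat -> (e i < e j)%nat).
  { intros i j Hij. induction Hij. apply e_S. pose proof (e_S m). lia. }
  assert (e_ge : forall j, (e j >= j)%nat).
  { intro j; induction j as [|j IH]. lia. pose proof (e_S j). lia. }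
  set (Y := fun m => exists j, m = e j).
  assert (Y_inf : infI Y). { intro N. exists (e N). split. apply e_ge. exists N; auto. }
  assert (subY : forall j m, (m >= e j)%nat -> Y m -> Ich j m).
  { intros j m Hm (i & ->). destruct (le_lt_dec j i) as [Hji|Hij].
    - apply (ch_mono j i); auto. - pose proof (e_mono i j Hij). lia. }
  assert (stab : forall J, infI J -> (forall m, J m -> Y m) -> rr J = rr Y).
  { intros J HJ HJY. apply Rle_antisym.
    2: { apply rr_mono; auto. exists O. auto. }
    assert (Hb : forall j, rr J <= rr Y + / (INR j + 1)).
    { intro j. set (J' := fun m => J m /\ (m >= e j)%nat).
      assert (HJ' : infI J'). { intro N. destruct (HJ (max N (e j))) as (n & Hn & Jn). exists n.
        split. lia. split; auto. lia. }
      assert (E1 : rr J <= rr J'). { apply rr_mono; auto. exists O. intros m _ [Jm _]. auto. }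
      assert (E2 : rr J' <= rr (Ich (S j)) + / (INR j + 1)).
      { apply (HF (Ich j, j) (ch_inf j)); auto. intros m [Jm Hm]. apply subY; auto. }
      assert (E3 : rr (Ich (S j)) <= rr Y).
      { apply rr_mono; auto. exists (e (S j)). intros m Hm Ym. apply subY; auto. }
      lra. }
    apply Rnot_lt_le. intro Hlt. destruct (archi (rr J - rr Y)) as [j Hj]; [lra|].
    specialize (Hb j). lra. }
  destruct (rr_spec Y Y_inf) as (p & HpY & Hpn & Hpm).
  assert (p_in : forall J, infI J -> (forall m, J m -> Y m) -> DD J p).
  { intros J HJ HJY. destruct (rr_spec J HJ) as (q & Hq & Hqn & _).
    assert (p = q). { apply (uniq_min HX HU (DD Y)). apply DD_mconv. auto.
      apply (DD_mono J); auto. exists O; auto.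
      intros z Hz. rewrite Hpn. auto. rewrite Hqn, Hpn, stab; auto; lra. }
    subst q; auto. }
  exists e. split; auto. exists p. split. apply (DD_ball Y); auto.
  intros g Hg. apply NNPP. intro Hn. apply not_Un_cv_0 in Hn. destruct Hn as (eps & He & Hinf).
  set (dif := fun j => Kadd (g (u (e j))) (Kopp (g p))).
  assert (contra : forall psi : K k -> R,
      (forall a b, psi (Kadd a b) = psi a + psi b) -> (forall a, psi (Kopp a) = - psi a) ->
      (forall t a, psi (Kmul (Kreal t) a) = t * psi a) -> (forall a, psi a <= Kabs a) ->
      (forall N, exists j, (j >= N)%nat /\ psi (dif j) >= eps / 2) -> False).
  { intros psi Padd Popp Psc Pb Hj.
    set (J := fun m => exists j, m = e j /\ psi (dif j) >= eps / 2).
    assert (HJ : infI J). { intro N. destruct (Hj N) as (j & Hjn & Hjp). exists (e j). split.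
      pose proof (e_ge j); lia. exists j; auto. }
    assert (HpJ := p_in J HJ ltac:(intros m (j & -> & _); exists j; auto)).
    destruct (f_bound HX g Hg) as (M & HM0 & HM).
    set (Hs := fun v : X => psi (g v) >= psi (g p) + eps / 2).
    assert (Hcl : closedS Hs).
    { intros v Hv. unfold Hs. apply Rnot_lt_ge. intro Hlt.
      set (eta := psi (g p) + eps / 2 - psi (g v)).
      destruct (Hv (eta / (M + 1))) as (y & Hy & Hd). { apply Rdiv_lt_0_compat; unfold eta; lra. }
      assert (psi (g y) - psi (g v) <= M * norm (vsub y v)).
      { replace (psi (g y) - psi (g v)) with (psi (g (vsub y v))).
        eapply Rle_trans. apply Pb. apply HM.
        rewrite (f_sub HX g Hg), Padd, Popp. ring. }
      rewrite (norm_sub_sym HX) in H.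
      assert (M * norm (vsub v y) <= M * (eta / (M + 1))) by (apply Rmult_le_compat_l; lra).
      assert (M * (eta / (M + 1)) < eta).
      { apply Rmult_lt_reg_l with (M + 1); [lra|]. field_simplify; [|lra]. unfold eta in *. nra. }
      unfold Hs in Hy. unfold eta in *. lra. }
    assert (Hcv : mconv Hs).
    { intros x y Hx Hy. unfold Hs, mid in *. rewrite (f_sc g Hg), Psc.
      destruct Hg as (GA & _ & _). rewrite GA, Padd. lra. }
    assert (Hp := hull_min (tl J 0) Hs Hcl Hcv).
    assert (Hp' : Hs p). { apply Hp. 2: apply HpJ. intros a (m & _ & (j & -> & Hj') & ->).
      unfold Hs. unfold dif in Hj'. rewrite Padd, Popp in Hj'. lra. }
    unfold Hs in Hp'. lra. }
  assert (H4 : forall N, exists j, (j >= N)%nat /\ ((Kre (dif j) >= eps / 2 \/ - Kre (dif j) >= eps / 2) \/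
                                              (Kim (dif j) >= eps / 2 \/ - Kim (dif j) >= eps / 2))).
  { intro N. destruct (Hinf N) as (j & Hj & Hje). exists j. split; auto.
    rewrite Rabs_right in Hje by (apply Rle_ge, Kabs_pos). fold (dif j) in Hje.
    pose proof (Kabs_le_re_im k (dif j)).
    destruct (Rle_or_lt (eps / 2) (Rabs (Kre (dif j)))).
    - left. unfold Rabs in H0. destruct (Rcase_abs (Kre (dif j))); [right|left]; lra.
    - right. unfold Rabs in H, H0. destruct (Rcase_abs (Kre (dif j))); destruct (Rcase_abs (Kim (dif j))); lra. }
  apply inf_or in H4. destruct H4 as [H4|H4]; apply inf_or in H4; destruct H4 as [H4|H4].
  - apply (contra Kre); auto. apply Kre_add. apply Kre_opp. apply Kre_rmul.
    intro a. pose proof (Kre_le k a). pose proof (Rle_abs (Kre a)). lra.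
  - apply (contra (fun a => - Kre a)); auto. intros; rewrite Kre_add; ring. intros; rewrite Kre_opp; ring.
    intros; rewrite Kre_rmul; ring.
    intro a. pose proof (Kre_le k a). pose proof (Rle_abs (- Kre a)). rewrite Rabs_Ropp in H0. lra.
  - apply (contra Kim); auto. apply Kim_add. apply Kim_opp. apply Kim_rmul.
    intro a. pose proof (Kim_le k a). pose proof (Rle_abs (Kim a)). lra.
  - apply (contra (fun a => - Kim a)); auto. intros; rewrite Kim_add; ring. intros; rewrite Kim_opp; ring.
    intros; rewrite Kim_rmul; ring.
    intro a. pose proof (Kim_le k a). pose proof (Rle_abs (- Kim a)). rewrite Rabs_Ropp in H0. lra.
Qed.
End WSC.

Lemma Un_cv0_get (a : nat -> R) : Un_cv a 0 -> forall eps, eps > 0 -> exists N, forall n, (n >= N)%nat -> Rabs (a n) < eps.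
Proof. intros H eps He. destruct (H eps He) as [N HN]. exists N. intros n Hn.
  specialize (HN n Hn). unfold R_dist in HN. rewrite Rminus_0_r in HN. auto. Qed.

Theorem general_sBPBp {k} (X Y : NormedData k) :
  is_normed X -> complete X -> is_normed Y -> uniformly_convex X -> schur_property Y -> sBPBp X Y.
Proof.
  intros HX HC HY HU HS eps He T HT Hop.
  pose proof HT as [Tlin _].
  apply NNPP. intro Hno.
  assert (Hx : forall n : nat, exists x0, in_sphere x0 /\ norm (T x0) > 1 - / (INR n + 1) /\
     forall x1, in_sphere x1 -> norm (T x1) = 1 -> norm (vsub x1 x0) >= eps).
  { intro n. apply NNPP. intro Hn. apply Hno. exists (/ (INR n + 1)). split. apply inv_Sn_pos.
    intros x0 Hs0 HT0. apply NNPP. intro Hn2. apply Hn. exists x0. split; auto. split; auto.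
    intros x1 Hs1 HT1. apply Rnot_lt_ge. intro Hlt. apply Hn2. exists x1; auto. }
  destruct (fchoice _ Hx) as [xs Hxs].
  destruct (wsc HX HC HU xs) as (e & e_S & p & Hp1 & Hw).
  { intro n. destruct (Hxs n) as [Hs _]. unfold in_sphere in Hs. lra. }
  assert (e_ge : forall j, (e j >= j)%nat). { intro j; induction j as [|j IH]. lia. pose proof (e_S j). lia. }
  assert (Hwc : weak_cv (fun j => T (xs (e j))) (T p)).
  { intros f Hf. apply (Hw (fun x => f (T x))). apply (comp_functional HX HY); auto. }
  apply HS in Hwc. pose proof (Un_cv0_get _ Hwc) as Hcv. clear Hwc.
  assert (HTp1 : norm (T p) <= 1). { pose proof (opnorm_le HX HY T Tlin Hop p). lra. }
  assert (HTp : norm (T p) = 1).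
  { apply Rle_antisym; auto. apply Rnot_lt_le. intro Hlt. set (eta := (1 - norm (T p)) / 3).
    destruct (Hcv eta) as [N HN]; [unfold eta; lra|].
    destruct (archi eta) as [N' HN']; [unfold eta; lra|].
    set (j := max N N'). specialize (HN j ltac:(unfold j; lia)).
    destruct (Hxs (e j)) as [_ [Hb _]].
    pose proof (inv_Sn_le N' (e j) ltac:(pose proof (e_ge j); unfold j in *; lia)).
    pose proof (norm_rev_tri HY (T (xs (e j))) (T p)). apply Rabs_le_inv in H0.
    rewrite Rabs_right in HN by (apply Rle_ge, (norm_nonneg HY)). unfold eta in *. lra. }
  assert (Hp : in_sphere p).
  { unfold in_sphere. pose proof (opnorm_le HX HY T Tlin Hop p). lra. }
  destruct (HU eps He) as (dl & Hdl & HUC).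
  destruct (Hcv dl Hdl) as [N HN].
  destruct (Hxs (e N)) as [Hs0 [_ Hfar]].
  specialize (Hfar p Hp HTp). rewrite (norm_sub_sym HX) in Hfar.
  specialize (HUC _ _ Hs0 Hp Hfar). change (norm (mid (xs (e N)) p) <= 1 - dl) in HUC.
  pose proof (opnorm_le HX HY T Tlin Hop (mid (xs (e N)) p)).
  rewrite (lin_mid T Tlin) in H.
  pose proof (norm_mid_ge HY (T (xs (e N))) (T p)).
  specialize (HN N ltac:(lia)). rewrite Rabs_right in HN by (apply Rle_ge, (norm_nonneg HY)).
  lra.
Qed.

Lemma lseq_ext {k P} (x y : lseq k P) : (forall n, lval x n = lval y n) -> x = y.
Proof. intro H. destruct x as [x Hx], y as [y Hy]. simpl in H.
  assert (x = y) by (apply functional_extensionality; auto). subst y.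
  f_equal. apply proof_irrelevance. Qed.

Lemma sps_ub a H N : sum_f_R0 a N <= sup_partial_sums a H.
Proof. unfold sup_partial_sums. destruct (completeness _ _ _) as [s [Hub Hl]]. simpl.
  apply Hub. exists N; auto. Qed.
Lemma sps_least a H M : (forall N, sum_f_R0 a N <= M) -> sup_partial_sums a H <= M.
Proof. intro HM. unfold sup_partial_sums. destruct (completeness _ _ _) as [s [Hub Hl]]. simpl.
  apply Hl. intros r [N ->]. auto. Qed.
Lemma sps_approx a H eps : eps > 0 -> exists N, sum_f_R0 a N > sup_partial_sums a H - eps.
Proof. intro He. apply NNPP. intro Hn.
  assert (sup_partial_sums a H <= sup_partial_sums a H - eps); [|lra].
  apply sps_least. intro N. apply Rnot_lt_le. intro Hlt. apply Hn. exists N. lra. Qed.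

Lemma sum_incr (a : nat -> R) n m : (forall i, 0 <= a i) -> (n <= m)%nat -> sum_f_R0 a n <= sum_f_R0 a m.
Proof. intros Ha Hnm. induction Hnm. lra. simpl. pose proof (Ha (S m)). lra. Qed.
Lemma sum_nonneg (a : nat -> R) n : (forall i, 0 <= a i) -> 0 <= sum_f_R0 a n.
Proof. intro Ha. induction n; simpl. apply Ha. pose proof (Ha (S n)); lra. Qed.
Lemma term_le_sum (a : nat -> R) n : (forall i, 0 <= a i) -> a n <= sum_f_R0 a n.
Proof. intro Ha. destruct n; simpl. lra. pose proof (sum_nonneg a n Ha). lra. Qed.

Lemma sps_cv a H : (forall i, 0 <= a i) -> Un_cv (sum_f_R0 a) (sup_partial_sums a H).
Proof. intros Ha eps He. destruct (sps_approx a H eps He) as [N HN]. exists N. intros n Hn.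
  unfold R_dist. pose proof (sps_ub a H n). pose proof (sum_incr a N n Ha Hn).
  rewrite Rabs_left1 by lra. lra. Qed.
Lemma sps_nonneg a H : (forall i, 0 <= a i) -> 0 <= sup_partial_sums a H.
Proof. intro Ha. pose proof (sps_ub a H 0). pose proof (sum_nonneg a 0 Ha). lra. Qed.
Lemma sps_ext a b Ha Hb : (forall n, a n = b n) -> sup_partial_sums a Ha = sup_partial_sums b Hb.
Proof. intro E. apply Rle_antisym; apply sps_least; intro N.
  rewrite (sum_eq a b) by auto. apply sps_ub. rewrite (sum_eq b a) by auto. apply sps_ub. Qed.
Lemma sps_zero a H : (forall i, 0 <= a i) -> sup_partial_sums a H = 0 -> forall n, a n = 0.
Proof. intros Ha E n. pose proof (term_le_sum a n Ha). pose proof (sps_ub a H n). pose proof (Ha n). lra. Qed.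
Lemma sps_scale a b Ha Hb c : 0 <= c -> (forall i, 0 <= a i) -> (forall n, b n = c * a n) ->
  sup_partial_sums b Hb = c * sup_partial_sums a Ha.
Proof. intros Hc Hpos E. apply Rle_antisym.
  - apply sps_least. intro N. rewrite (sum_eq b (fun n => a n * c)) by (intros; rewrite E; ring). rewrite <- scal_sum.
    apply Rmult_le_compat_l; auto. apply sps_ub.
  - destruct (Req_dec c 0) as [->|Hc0]. rewrite Rmult_0_l. apply sps_nonneg. intro i; rewrite E; nra.
    assert (sup_partial_sums a Ha <= sup_partial_sums b Hb / c).
    { apply sps_least. intro N. pose proof (sps_ub b Hb N).
      rewrite (sum_eq b (fun n => a n * c)), <- scal_sum in H by (intros; rewrite E; ring).
      apply Rmult_le_reg_l with c; [lra|]. field_simplify; lra. }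
    apply Rmult_le_compat_l with (r := c) in H; [|lra]. field_simplify in H; lra.
Qed.
Lemma sps_le2 a b c Ha Hb Hc : (forall n, c n <= a n + b n) ->
  sup_partial_sums c Hc <= sup_partial_sums a Ha + sup_partial_sums b Hb.
Proof. intro E. apply sps_least. intro N. apply Rle_trans with (sum_f_R0 (fun n => a n + b n) N).
  apply sum_Rle; auto. rewrite plus_sum. pose proof (sps_ub a Ha N); pose proof (sps_ub b Hb N). lra. Qed.

Lemma ell1_normed k : is_normed (ell1 k).
Proof.
  repeat split.
  - intros x y z. apply lseq_ext. intro n. simpl. destruct k; simpl. ring. f_equal; ring.
  - intros x y. apply lseq_ext. intro n. simpl. destruct k; simpl. ring. f_equal; ring.
  - intros x. apply lseq_ext. intro n. simpl. destruct k; simpl. ring. destruct (lval x n); simpl; f_equal; ring.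
  - intros x. apply lseq_ext. intro n. simpl. apply Kadd_opp.
  - intros a b x. apply lseq_ext. intro n. simpl. destruct k; simpl. ring. destruct a, b, (lval x n); simpl; f_equal; ring.
  - intros x. apply lseq_ext. intro n. simpl. destruct k; simpl. ring. destruct (lval x n); simpl; f_equal; ring.
  - intros a x y. apply lseq_ext. intro n. simpl. destruct k; simpl. ring. destruct a, (lval x n), (lval y n); simpl; f_equal; ring.
  - intros a b x. apply lseq_ext. intro n. simpl. destruct k; simpl. ring. destruct a, b, (lval x n); simpl; f_equal; ring.
  - intros x Hx. apply lseq_ext. intro n. simpl. apply Kabs_eq0.
    apply (sps_zero (fun n => Kabs (lval x n)) (lprop x)); auto. intro; apply Kabs_pos.
  - intros a x. simpl. unfold l1_norm. apply sps_scale. apply Kabs_pos. intro; apply Kabs_pos.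
    intro n; simpl. apply Kabs_mul.
  - intros x y. simpl. unfold l1_norm. apply sps_le2. intro n. simpl. apply Kabs_triang.
Qed.

Lemma CS_sum (a b : nat -> R) N :
  (sum_f_R0 (fun i => a i * b i) N) ^ 2 <= sum_f_R0 (fun i => a i ^ 2) N * sum_f_R0 (fun i => b i ^ 2) N.
Proof. induction N. simpl. nra.
  rewrite !tech5. cbv beta.
  set (C := sum_f_R0 (fun i => a i * b i) N) in *.
  set (A := sum_f_R0 (fun i => a i ^ 2) N) in *.
  set (B := sum_f_R0 (fun i => b i ^ 2) N) in *.
  assert (HA : 0 <= A) by (apply sum_nonneg; intro; apply pow2_ge_0).
  assert (HB : 0 <= B) by (apply sum_nonneg; intro; apply pow2_ge_0).
  set (x := a (S N)). set (y := b (S N)).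
  assert (Hk : 2 * x * y * C <= A * (y * y) + x * x * B).
  { destruct (Rle_or_lt (2 * x * y * C) 0). nra.
    assert ((2 * x * y * C) * (2 * x * y * C) <= (A * (y * y) + x * x * B) * (A * (y * y) + x * x * B)).
    { assert (HC : C * C <= A * B) by (replace (C * C) with (C ^ 2) by ring; exact IHN).
      assert (H1 : 0 <= (A * (y * y) - x * x * B) * (A * (y * y) - x * x * B)) by apply Rle_0_sqr.
      assert (H2 : 0 <= x * x * (y * y)) by (replace (x * x * (y * y)) with ((x * y) * (x * y)) by ring; apply Rle_0_sqr).
      assert (H3 : (2 * x * y * C) * (2 * x * y * C) = 4 * (x * x * (y * y)) * (C * C)) by ring.
      assert (H4 : 4 * (x * x * (y * y)) * (C * C) <= 4 * (x * x * (y * y)) * (A * B))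
        by (apply Rmult_le_compat_l; lra).
      nra. }
    apply Rsqr_incr_0_var. unfold Rsqr. lra.
    assert (0 <= y * y) by apply Rle_0_sqr. assert (0 <= x * x) by apply Rle_0_sqr.
    apply Rplus_le_le_0_compat; apply Rmult_le_pos; lra. }
  assert (HC : C * C <= A * B) by (replace (C * C) with (C ^ 2) by ring; exact IHN).
  replace ((C + x * y) ^ 2) with (C * C + 2 * x * y * C + x * x * (y * y)) by ring.
  replace ((A + x ^ 2) * (B + y ^ 2)) with (A * B + (A * (y * y) + x * x * B) + x * x * (y * y)) by ring.
  lra.
Qed.

Lemma sqr_sum_expand (a b : nat -> R) N :
  sum_f_R0 (fun i => (a i + b i) ^ 2) N =
  sum_f_R0 (fun i => a i ^ 2) N + 2 * sum_f_R0 (fun i => a i * b i) N + sum_f_R0 (fun i => b i ^ 2) N.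
Proof. induction N. simpl. ring. rewrite !tech5, IHN. ring. Qed.

Lemma ell2_normed k : is_normed (ell2 k).
Proof.
  repeat split.
  - intros x y z. apply lseq_ext. intro n. simpl. destruct k; simpl. ring. f_equal; ring.
  - intros x y. apply lseq_ext. intro n. simpl. destruct k; simpl. ring. f_equal; ring.
  - intros x. apply lseq_ext. intro n. simpl. destruct k; simpl. ring. destruct (lval x n); simpl; f_equal; ring.
  - intros x. apply lseq_ext. intro n. simpl. apply Kadd_opp.
  - intros a b x. apply lseq_ext. intro n. simpl. destruct k; simpl. ring. destruct a, b, (lval x n); simpl; f_equal; ring.
  - intros x. apply lseq_ext. intro n. simpl. destruct k; simpl. ring. destruct (lval x n); simpl; f_equal; ring.
  - intros a x y. apply lseq_ext. intro n. simpl. destruct k; simpl. ring. destruct a, (lval x n), (lval y n); simpl; f_equal; ring.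
  - intros a b x. apply lseq_ext. intro n. simpl. destruct k; simpl. ring. destruct a, b, (lval x n); simpl; f_equal; ring.
  - intros x Hx. apply lseq_ext. intro n. simpl. apply Kabs_eq0. simpl in Hx. unfold l2_norm in Hx.
    apply sqrt_eq_0 in Hx. 2: apply sps_nonneg; intro; apply pow2_ge_0.
    pose proof (sps_zero (fun n => Kabs (lval x n) ^ 2) (lprop x) ltac:(intro; apply pow2_ge_0) Hx n).
    simpl in H. pose proof (Kabs_pos _ (lval x n)). nra.
  - intros a x. simpl. unfold l2_norm.
    rewrite (sps_scale (fun n => Kabs (lval x n) ^ 2) _ (lprop x) _ (Kabs a ^ 2)).
    + rewrite sqrt_mult. rewrite sqrt_pow2 by apply Kabs_pos. reflexivity. apply pow2_ge_0.
      apply sps_nonneg; intro; apply pow2_ge_0.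
    + apply pow2_ge_0. + intro; apply pow2_ge_0.
    + intro n; simpl. rewrite Kabs_mul. ring.
  - intros x y. simpl. unfold l2_norm.
    set (Sx := sup_partial_sums _ (lprop x)). set (Sy := sup_partial_sums _ (lprop y)).
    assert (HSx : 0 <= Sx) by (apply sps_nonneg; intro; apply pow2_ge_0).
    assert (HSy : 0 <= Sy) by (apply sps_nonneg; intro; apply pow2_ge_0).
    rewrite <- (sqrt_pow2 (sqrt Sx + sqrt Sy)) by (pose proof (sqrt_pos Sx); pose proof (sqrt_pos Sy); lra).
    apply sqrt_le_1_alt. apply sps_least. intro N. simpl.
    set (a := fun n => Kabs (lval x n)). set (b := fun n => Kabs (lval y n)).
    apply Rle_trans with (sum_f_R0 (fun i => (a i + b i) ^ 2) N).
    { apply sum_Rle. intros n _. unfold a, b. pose proof (Kabs_triang _ (lval x n) (lval y n)).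
      pose proof (Kabs_pos _ (Kadd (lval x n) (lval y n))). pose proof (Kabs_pos _ (lval x n)).
      pose proof (Kabs_pos _ (lval y n)). simpl. nra. }
    rewrite sqr_sum_expand.
    pose proof (CS_sum a b N).
    set (A := sum_f_R0 (fun i => a i ^ 2) N) in *. set (B := sum_f_R0 (fun i => b i ^ 2) N) in *.
    set (C := sum_f_R0 (fun i => a i * b i) N) in *.
    assert (A <= Sx) by apply (sps_ub _ (lprop x)).
    assert (B <= Sy) by apply (sps_ub _ (lprop y)).
    assert (HA : 0 <= A) by (apply sum_nonneg; intro; apply pow2_ge_0).
    assert (HB : 0 <= B) by (apply sum_nonneg; intro; apply pow2_ge_0).
    assert (C <= sqrt Sx * sqrt Sy).
    { rewrite <- sqrt_mult by lra. destruct (Rle_or_lt C 0). pose proof (sqrt_pos (Sx * Sy)); lra.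
      rewrite <- (sqrt_pow2 C) by lra. apply sqrt_le_1_alt.
      apply Rle_trans with (A * B); auto. apply Rmult_le_compat; auto. }
    pose proof (sqrt_sqrt Sx HSx). pose proof (sqrt_sqrt Sy HSy). simpl. nra.
Qed.

Lemma Kabs2 k (a : K k) : Kabs a ^ 2 = Kre a ^ 2 + Kim a ^ 2.
Proof. destruct k; unfold Kabs, Kre, Kim. rewrite pow2_abs. ring. destruct a as [x y]; unfold fst, snd.
  rewrite pow2_sqrt by nra. ring. Qed.

Lemma par_K k (a b : K k) : Kabs (Kadd a b) ^ 2 + Kabs (Kadd a (Kopp b)) ^ 2 = 2 * Kabs a ^ 2 + 2 * Kabs b ^ 2.
Proof. rewrite !Kabs2, !Kre_add, !Kim_add, !Kre_opp, !Kim_opp. ring. Qed.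

Lemma lim_le (u : nat -> R) l B : Un_cv u l -> (forall n, u n <= B) -> l <= B.
Proof. intros Hu HB. apply Rnot_lt_le. intro Hlt. destruct (Hu (l - B)) as [N HN]; [lra|].
  specialize (HN N (le_n N)). specialize (HB N). unfold R_dist in HN. apply Rabs_def2 in HN. lra. Qed.

Lemma ell2_UC k : uniformly_convex (ell2 k).
Proof.
  intros eps He. set (e := Rmin eps 2).
  assert (He1 : 0 < e) by (apply Rmin_pos; lra). assert (He2 : e <= 2) by apply Rmin_r.
  assert (He3 : e <= eps) by apply Rmin_l.
  exists (1 - sqrt (1 - e ^ 2 / 4)). split.
  { assert (sqrt (1 - e ^ 2 / 4) < 1); [|lra]. rewrite <- sqrt_1 at 2. apply sqrt_lt_1_alt.
    split; [|nra]. nra. }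
  intros x y Hx Hy Hxy. unfold in_sphere in Hx, Hy.
  change (norm (sc (/ 2) (vadd x y)) <= 1 - (1 - sqrt (1 - e ^ 2 / 4))).
  rewrite (norm_sc (ell2_normed k)), Rabs_right by lra.
  simpl in Hx, Hy, Hxy |- *. unfold l2_norm in *.
  set (S1 := sup_partial_sums _ (lprop (l2_add k x y))) in *.
  set (S2 := sup_partial_sums _ (lprop (l2_add k x (l2_opp k y)))) in *.
  set (Sx := sup_partial_sums _ (lprop x)) in *. set (Sy := sup_partial_sums _ (lprop y)) in *.
  assert (P0 : forall (z : lseq k l2_pred), 0 <= sup_partial_sums _ (lprop z)).
  { intro z. apply sps_nonneg. intro; apply pow2_ge_0. }
  assert (HSx : Sx = 1). { rewrite <- (pow2_sqrt Sx) by apply P0. rewrite Hx. ring. }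
  assert (HSy : Sy = 1). { rewrite <- (pow2_sqrt Sy) by apply P0. rewrite Hy. ring. }
  assert (Hpar : S1 + S2 <= 2 * Sx + 2 * Sy).
  { apply (lim_le (fun N => sum_f_R0 (fun n => Kabs (lval (l2_add k x y) n) ^ 2) N +
                             sum_f_R0 (fun n => Kabs (lval (l2_add k x (l2_opp k y)) n) ^ 2) N)).
    apply CV_plus; apply sps_cv; intro; apply pow2_ge_0.
    intro N. rewrite <- plus_sum. simpl.
    rewrite (sum_eq _ (fun n => 2 * Kabs (lval x n) ^ 2 + 2 * Kabs (lval y n) ^ 2)) by (intros; apply par_K).
    rewrite plus_sum. pose proof (sps_ub _ (lprop x) N). pose proof (sps_ub _ (lprop y) N).
    rewrite (sum_eq _ (fun n => Kabs (lval x n) ^ 2 * 2)) by (intros; ring).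
    rewrite (sum_eq (fun n => 2 * Kabs (lval y n) ^ 2) (fun n => Kabs (lval y n) ^ 2 * 2)) by (intros; ring).
    rewrite <- !scal_sum. fold Sx Sy in H, H0. lra. }
  assert (HS2 : S2 >= e ^ 2).
  { assert (sqrt S2 >= e) by lra. rewrite <- (pow2_sqrt S2) by apply P0. apply Rle_ge. apply pow_incr. lra. }
  assert (S1 / 4 <= 1 - e ^ 2 / 4) by lra.
  replace (/ 2 * sqrt S1) with (sqrt (S1 / 4)).
  apply Rle_trans with (sqrt (1 - e ^ 2 / 4)). apply sqrt_le_1_alt; auto.
  replace (e * (e * 1)) with (e ^ 2) by ring. lra.
  replace (S1 / 4) with (S1 * (/ 2) ^ 2) by field. rewrite sqrt_mult by (try apply P0; try apply pow2_ge_0).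
  rewrite sqrt_pow2 by lra. ring.
Qed.

Lemma l2_P1 k (z : ell2 k) N : sum_f_R0 (fun i => Kabs (lval z i) ^ 2) N <= norm z ^ 2.
Proof. change (norm z) with (l2_norm k z). unfold l2_norm. rewrite pow2_sqrt. apply sps_ub. apply sps_nonneg. intro; apply pow2_ge_0. Qed.
Lemma l2_P2 k (z : ell2 k) c : 0 <= c -> (forall N, sum_f_R0 (fun i => Kabs (lval z i) ^ 2) N <= c ^ 2) -> norm z <= c.
Proof. intros Hc HN. change (norm z) with (l2_norm k z). unfold l2_norm. rewrite <- (sqrt_pow2 c Hc). apply sqrt_le_1_alt.
  apply sps_least. auto. Qed.
Lemma l2_coord k (z : ell2 k) i : Kabs (lval z i) <= norm z.
Proof. pose proof (l2_P1 k z i). pose proof (term_le_sum (fun i => Kabs (lval z i) ^ 2) i ltac:(intro; apply pow2_ge_0)).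
  cbv beta in H0. pose proof (norm_nonneg (ell2_normed k) z).
  assert (H3 : Kabs (lval z i) ^ 2 <= norm z ^ 2) by lra.
  apply Rsqr_incr_0_var; auto. unfold Rsqr. simpl in H3. lra. Qed.

Lemma Kmk_spec k (a : K k) x y : Kre (Kadd a (Kopp (Kmk x y))) = Kre a - x /\
  Rabs (Kim (Kadd a (Kopp (Kmk x y)))) <= Rabs (Kim a - y).
Proof. destruct k; simpl. split. ring. rewrite Rabs_R0. apply Rabs_pos. split. ring.
  replace (snd a + - y) with (snd a - y) by ring. lra. Qed.

Lemma K_complete k (c : nat -> K k) :
  (forall eps, eps > 0 -> exists N, forall m n, (m >= N)%nat -> (n >= N)%nat -> Kabs (Kadd (c m) (Kopp (c n))) < eps) ->
  exists l, forall eps, eps > 0 -> exists N, forall m, (m >= N)%nat -> Kabs (Kadd (c m) (Kopp l)) < eps.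
Proof. intro Hc.
  assert (Cr : Cauchy_crit (fun m => Kre (c m))).
  { intros eps He. destruct (Hc eps He) as [N HN]. exists N. intros n m Hn Hm. unfold R_dist.
    pose proof (Kre_le _ (Kadd (c n) (Kopp (c m)))). rewrite Kre_add, Kre_opp in H.
    specialize (HN n m Hn Hm). replace (Kre (c n) - Kre (c m)) with (Kre (c n) + - Kre (c m)) by ring. lra. }
  assert (Ci : Cauchy_crit (fun m => Kim (c m))).
  { intros eps He. destruct (Hc eps He) as [N HN]. exists N. intros n m Hn Hm. unfold R_dist.
    pose proof (Kim_le _ (Kadd (c n) (Kopp (c m)))). rewrite Kim_add, Kim_opp in H.
    specialize (HN n m Hn Hm). replace (Kim (c n) - Kim (c m)) with (Kim (c n) + - Kim (c m)) by ring. lra. }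
  destruct (R_complete _ Cr) as [lr Hr]. destruct (R_complete _ Ci) as [li Hi].
  exists (Kmk lr li). intros eps He.
  destruct (Hr (eps/2)) as [N1 H1]; [lra|]. destruct (Hi (eps/2)) as [N2 H2]; [lra|].
  exists (max N1 N2). intros m Hm. specialize (H1 m ltac:(lia)). specialize (H2 m ltac:(lia)).
  unfold R_dist in H1, H2. pose proof (Kabs_le_re_im _ (Kadd (c m) (Kopp (Kmk lr li)))).
  destruct (Kmk_spec _ (c m) lr li) as [E1 E2]. rewrite E1 in H. lra.
Qed.

Lemma Kabs_diff_cont k (a b w : K k) :
  Rabs (Kabs (Kadd a (Kopp w)) - Kabs (Kadd b (Kopp w))) <= Kabs (Kadd a (Kopp b)).
Proof. apply Rabs_le. pose proof (Kabs_sub_tri _ a b w). pose proof (Kabs_sub_tri _ b a w).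
  rewrite (Kabs_sub_sym _ b a) in H0. lra. Qed.

Lemma sum_cv_K k (c : nat -> nat -> K k) (L w : nat -> K k) :
  (forall i, Un_cv (fun m => Kabs (Kadd (c m i) (Kopp (L i)))) 0) ->
  forall N, Un_cv (fun m => sum_f_R0 (fun i => Kabs (Kadd (c m i) (Kopp (w i))) ^ 2) N)
                  (sum_f_R0 (fun i => Kabs (Kadd (L i) (Kopp (w i))) ^ 2) N).
Proof. intros Hc.
  assert (H1 : forall i, Un_cv (fun m => Kabs (Kadd (c m i) (Kopp (w i)))) (Kabs (Kadd (L i) (Kopp (w i))))).
  { intros i eps He. destruct (Hc i eps He) as [N HN]. exists N. intros n Hn. specialize (HN n Hn).
    unfold R_dist in *. rewrite Rminus_0_r, Rabs_right in HN by (apply Rle_ge, Kabs_pos).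
    pose proof (Kabs_diff_cont _ (c n i) (L i) (w i)). lra. }
  assert (H2 : forall i, Un_cv (fun m => Kabs (Kadd (c m i) (Kopp (w i))) ^ 2) (Kabs (Kadd (L i) (Kopp (w i))) ^ 2)).
  { intro i. simpl. rewrite Rmult_1_r. eapply Un_cv_ext.
    2: apply CV_mult; apply H1. intro n. simpl. ring. }
  intro N. induction N. simpl. apply H2.
  simpl. apply CV_plus; auto. apply H2.
Qed.

Lemma lim_le_ev (u : nat -> R) l B N0 : Un_cv u l -> (forall n, (n >= N0)%nat -> u n <= B) -> l <= B.
Proof. intros Hu HB. apply Rnot_lt_le. intro Hlt. destruct (Hu (l - B)) as [N HN]; [lra|].
  specialize (HN (max N N0) ltac:(lia)). specialize (HB (max N N0) ltac:(lia)).
  unfold R_dist in HN. apply Rabs_def2 in HN. lra. Qed.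

Lemma Ksub0 k (a : K k) : Kadd a (Kopp K0) = a.
Proof. destruct k; simpl. ring. destruct a; simpl; f_equal; ring. Qed.

Lemma ell2_complete k : complete (ell2 k).
Proof.
  intros u Hu. pose proof (ell2_normed k) as HN.
  assert (Hcoord : forall i, exists l, forall eps, eps > 0 -> exists N, forall m, (m >= N)%nat ->
             Kabs (Kadd (lval (u m) i) (Kopp l)) < eps).
  { intro i. apply K_complete. intros eps He. destruct (Hu eps He) as [N HN']. exists N.
    intros m n Hm Hn. specialize (HN' m n Hm Hn).
    pose proof (l2_coord k (vsub (u m) (u n)) i). simpl in H, HN' |- *. lra. }
  destruct (fchoice _ Hcoord) as [L HL].
  assert (Hc : forall i, Un_cv (fun m => Kabs (Kadd (lval (u m) i) (Kopp (L i)))) 0).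
  { intros i eps He. destruct (HL i eps He) as [N HN']. exists N. intros n Hn. unfold R_dist.
    rewrite Rminus_0_r, Rabs_right by (apply Rle_ge, Kabs_pos). auto. }
  destruct (Hu 1) as [N0 HN0]; [lra|].
  set (Bd := norm (u N0) + 1).
  assert (HBd : forall m, (m >= N0)%nat -> norm (u m) <= Bd).
  { intros m Hm. specialize (HN0 m N0 Hm (le_n _)). pose proof (norm_rev_tri HN (u m) (u N0)).
    apply Rabs_le_inv in H. unfold Bd. lra. }
  assert (HLp : l2_pred L).
  { exists (Bd ^ 2). intro N.
    pose proof (sum_cv_K k (fun m i => lval (u m) i) L (fun _ => K0) Hc N) as Hs.
    rewrite (sum_eq (fun i => Kabs (L i) ^ 2) (fun i => Kabs (Kadd (L i) (Kopp K0)) ^ 2))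
      by (intros; rewrite Ksub0; auto).
    apply (lim_le_ev _ _ _ N0 Hs).
    intros m Hm. rewrite (sum_eq _ (fun i => Kabs (lval (u m) i) ^ 2)).
    pose proof (l2_P1 k (u m) N). pose proof (HBd m Hm). pose proof (norm_nonneg HN (u m)).
    apply Rle_trans with (norm (u m) ^ 2); auto. apply pow_incr. lra.
    intros; rewrite Ksub0; auto. }
  set (Lq := {| lval := L; lprop := HLp |} : lseq k l2_pred).
  exists Lq. intros eps He. destruct (Hu (eps/2)) as [N HN']; [lra|]. exists N. intros m Hm.
  assert (norm (vsub (u m) Lq) <= eps / 2); [|lra].
  apply l2_P2; [lra|]. intro M.
  pose proof (sum_cv_K k (fun n i => lval (u n) i) L (fun i => lval (u m) i) Hc M) as Hs.
  rewrite (sum_eq _ (fun i => Kabs (Kadd (L i) (Kopp (lval (u m) i))) ^ 2)).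
  apply (lim_le_ev _ _ _ N Hs). intros n Hn.
  pose proof (l2_P1 k (vsub (u n) (u m)) M). specialize (HN' n m Hn Hm).
  pose proof (norm_nonneg HN (vsub (u n) (u m))).
  apply Rle_trans with (norm (vsub (u n) (u m)) ^ 2). apply H. apply pow_incr. lra.
  intros i _. simpl. rewrite Kabs_sub_sym. reflexivity.
Qed.

Lemma ell2_Banach k : is_Banach (ell2 k).
Proof. pose proof (ell2_normed k) as H. pose proof (ell2_complete k) as C.
  destruct H as (h1&h2&h3&h4&h5&h6&h7&h8&h9&h10&h11). repeat split; auto. Qed.

Fixpoint ps (a : nat -> R) (n : nat) : R := match n with O => 0 | S n => ps a n + a n end.
Lemma ps_sum a N : ps a (S N) = sum_f_R0 a N.
Proof. induction N. simpl. ring. simpl in *. rewrite IHN. ring. Qed.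
Lemma ps_incr (a : nat -> R) n m : (forall i, 0 <= a i) -> (n <= m)%nat -> ps a n <= ps a m.
Proof. intros Ha H. induction H. lra. simpl. pose proof (Ha m). lra. Qed.
Lemma ps_nonneg (a : nat -> R) n : (forall i, 0 <= a i) -> 0 <= ps a n.
Proof. intro Ha. apply (ps_incr a 0 n Ha). lia. Qed.
Lemma range_le (a b : nat -> R) p q : (p <= q)%nat -> (forall i, (p <= i)%nat -> (i < q)%nat -> a i <= b i) ->
  ps a q - ps a p <= ps b q - ps b p.
Proof. intros H. induction H; intro Hab. lra. simpl.
  assert (a m <= b m) by (apply Hab; lia). assert (ps a m - ps a p <= ps b m - ps b p) by (apply IHle; intros; apply Hab; lia).
  lra. Qed.

Lemma l1_ps_le k (z : ell1 k) n : ps (fun i => Kabs (lval z i)) n <= norm z.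
Proof. destruct n. simpl. apply (norm_nonneg (ell1_normed k)). rewrite ps_sum. apply (sps_ub _ (lprop z)). Qed.
Lemma l1_ps_cv k (z : ell1 k) eps : eps > 0 -> exists B, forall B', (B' >= B)%nat -> norm z - ps (fun i => Kabs (lval z i)) B' < eps.
Proof. intro He. destruct (sps_approx _ (lprop z) eps He) as [N HN]. exists (S N). intros B' HB'.
  pose proof (ps_incr (fun i => Kabs (lval z i)) (S N) B' ltac:(intro; apply Kabs_pos) HB').
  rewrite ps_sum in H. change (norm z) with (l1_norm k z). unfold l1_norm. lra. Qed.

Lemma coord_bf k (i : nat) : is_bounded_functional (fun v : ell1 k => lval v i).
Proof. split; [|split].
  - intros x y. reflexivity. - intros a x. reflexivity.
  - exists 1. intro x. rewrite Rmult_1_l. pose proof (l1_ps_le k x (S i)). cbn [ps] in H.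
    pose proof (ps_nonneg (fun i => Kabs (lval x i)) i ltac:(intro; apply Kabs_pos)). lra. Qed.

Fixpoint Ksum {k} (c : nat -> K k) (n : nat) : K k := match n with O => K0 | S n => Kadd (Ksum c n) (c n) end.

Lemma Ksum_diff k (c : nat -> K k) n m : (n <= m)%nat ->
  Kabs (Kadd (Ksum c m) (Kopp (Ksum c n))) <= ps (fun i => Kabs (c i)) m - ps (fun i => Kabs (c i)) n.
Proof. intro H. induction H. rewrite Kabs_self_sub. lra. simpl.
  replace (Kadd (Kadd (Ksum c m) (c m)) (Kopp (Ksum c n))) with (Kadd (Kadd (Ksum c m) (Kopp (Ksum c n))) (c m)).
  pose proof (Kabs_triang _ (Kadd (Ksum c m) (Kopp (Ksum c n))) (c m)). lra.
  destruct k; simpl. ring. destruct (Ksum c m), (Ksum c n), (c m); simpl; f_equal; ring. Qed.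
Lemma Ksum_abs k (c : nat -> K k) n : Kabs (Ksum c n) <= ps (fun i => Kabs (c i)) n.
Proof. induction n; simpl. rewrite Kabs_K0. lra. pose proof (Kabs_triang _ (Ksum c n) (c n)). lra. Qed.
Lemma Ksum_re k (c : nat -> K k) n : Kre (Ksum c n) = ps (fun i => Kre (c i)) n.
Proof. induction n; simpl. destruct k; reflexivity. rewrite Kre_add, IHn. reflexivity. Qed.
Lemma Ksum_add k (c d : nat -> K k) n : Ksum (fun i => Kadd (c i) (d i)) n = Kadd (Ksum c n) (Ksum d n).
Proof. induction n; simpl. destruct k; simpl. ring. f_equal; ring. rewrite IHn.
  destruct k; simpl. ring. destruct (Ksum c n), (Ksum d n), (c n), (d n); simpl; f_equal; ring. Qed.
Lemma Ksum_mul k a (c : nat -> K k) n : Ksum (fun i => Kmul a (c i)) n = Kmul a (Ksum c n).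
Proof. induction n; simpl. destruct k; simpl. ring. destruct a; simpl; f_equal; ring. rewrite IHn.
  destruct k; simpl. ring. destruct a, (Ksum c n), (c n); simpl; f_equal; ring. Qed.

Definition Kcv {k} (s : nat -> K k) (l : K k) := forall eps, eps > 0 -> exists N, forall m, (m >= N)%nat -> Kabs (Kadd (s m) (Kopp l)) < eps.

Lemma Kcv_unique k (s : nat -> K k) l1 l2 : Kcv s l1 -> Kcv s l2 -> l1 = l2.
Proof. intros H1 H2. apply Kabs_sub_eq0. apply Rle_antisym; [|apply Kabs_pos].
  apply Rnot_lt_le. intro Hlt.
  destruct (H1 (Kabs (Kadd l1 (Kopp l2)) / 2)) as [N1 HN1]; [clear H1 H2; lra|].
  destruct (H2 (Kabs (Kadd l1 (Kopp l2)) / 2)) as [N2 HN2]; [clear H1 H2; lra|]. clear H1 H2.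
  specialize (HN1 (max N1 N2) ltac:(lia)). specialize (HN2 (max N1 N2) ltac:(lia)).
  pose proof (Kabs_sub_tri _ l1 (s (max N1 N2)) l2). rewrite (Kabs_sub_sym _ l1 (s (max N1 N2))) in H. lra. Qed.

Lemma Kcv_exists k (c : nat -> K k) Bd : (forall n, ps (fun i => Kabs (c i)) n <= Bd) -> exists l, Kcv (Ksum c) l.
Proof. intro HB. apply K_complete. intros eps He.
  destruct (sup_exists (fun x => exists n, x = ps (fun i => Kabs (c i)) n) Bd) as (s & Hs1 & _ & Hs2).
  { exists 0, O. reflexivity. } { intros x (n & ->). auto. }
  destruct (Hs2 eps He) as (x & (N & ->) & HN). exists N. intros m n Hm Hn.
  assert (Hpos : forall i, 0 <= Kabs (c i)) by (intro; apply Kabs_pos).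
  destruct (le_ge_dec n m).
  - pose proof (Ksum_diff k c n m l). pose proof (ps_incr _ N n Hpos Hn).
    assert (ps (fun i => Kabs (c i)) m <= s) by (apply Hs1; eauto). lra.
  - pose proof (Ksum_diff k c m n g). pose proof (ps_incr _ N m Hpos Hm).
    assert (ps (fun i => Kabs (c i)) n <= s) by (apply Hs1; eauto). rewrite Kabs_sub_sym. lra.
Qed.

Ltac kring k := destruct k; simpl; [ring | repeat match goal with |- context [?x] => match type of x with (R*R)%type => is_var x; destruct x end end; simpl; f_equal; ring].

Lemma Kmul_distr k (s a b : K k) : Kmul s (Kadd a b) = Kadd (Kmul s a) (Kmul s b).
Proof. destruct k; simpl. ring. destruct s, a, b; simpl; f_equal; ring. Qed.
Lemma Kmul_swap k (s a x : K k) : Kmul s (Kmul a x) = Kmul a (Kmul s x).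
Proof. destruct k; simpl. ring. destruct s, a, x; simpl; f_equal; ring. Qed.
Lemma Ksub_add k (A B a b : K k) : Kadd (Kadd A B) (Kopp (Kadd a b)) = Kadd (Kadd A (Kopp a)) (Kadd B (Kopp b)).
Proof. destruct k; simpl. ring. destruct A, B, a, b; simpl; f_equal; ring. Qed.
Lemma Ksub_mul k (a A l : K k) : Kadd (Kmul a A) (Kopp (Kmul a l)) = Kmul a (Kadd A (Kopp l)).
Proof. destruct k; simpl. ring. destruct a, A, l; simpl; f_equal; ring. Qed.
Lemma Ksum_ext k (c d : nat -> K k) n : (forall i, c i = d i) -> Ksum c n = Ksum d n.
Proof. intro H. induction n; simpl; auto. rewrite IHn, H. reflexivity. Qed.

Lemma sigma_functional k (sg : nat -> K k) : (forall i, Kabs (sg i) <= 1) ->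
  exists f : ell1 k -> K k, is_bounded_functional f /\
   forall v M0 c, (forall M, (M >= M0)%nat -> ps (fun i => Kre (Kmul (sg i) (lval v i))) M >= c) -> Kre (f v) >= c.
Proof. intro Hsg.
  assert (Hex : forall v : ell1 k, exists l, Kcv (Ksum (fun i => Kmul (sg i) (lval v i))) l).
  { intro v. apply (Kcv_exists k _ (norm v)). intro n. eapply Rle_trans. 2: apply l1_ps_le.
    pose proof (range_le (fun i => Kabs (Kmul (sg i) (lval v i))) (fun i => Kabs (lval v i)) 0 n ltac:(lia)).
    simpl in H. rewrite !Rminus_0_r in H. apply H. intros i _ _. rewrite Kabs_mul.
    pose proof (Kabs_pos _ (lval v i)). pose proof (Hsg i). pose proof (Kabs_pos _ (sg i)). nra. }
  destruct (fchoice _ Hex) as [f Hf]. exists f. split; [split; [|split]|].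
  - intros x y. apply (Kcv_unique k (Ksum (fun i => Kmul (sg i) (lval (vadd x y) i)))); auto.
    intros eps He. destruct (Hf x (eps/2)) as [N1 H1]; [lra|]. destruct (Hf y (eps/2)) as [N2 H2]; [lra|].
    exists (max N1 N2). intros m Hm. specialize (H1 m ltac:(lia)). specialize (H2 m ltac:(lia)).
    rewrite (Ksum_ext k _ (fun i => Kadd (Kmul (sg i) (lval x i)) (Kmul (sg i) (lval y i)))).
    rewrite Ksum_add, Ksub_add. pose proof (Kabs_triang _ (Kadd (Ksum (fun i => Kmul (sg i) (lval x i)) m) (Kopp (f x)))
      (Kadd (Ksum (fun i => Kmul (sg i) (lval y i)) m) (Kopp (f y)))). lra.
    intro i. simpl. apply Kmul_distr.
  - intros a x. apply (Kcv_unique k (Ksum (fun i => Kmul (sg i) (lval (vscal a x) i)))); auto.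
    intros eps He. destruct (Hf x (eps / (Kabs a + 1))) as [N1 H1].
    { apply Rdiv_lt_0_compat; auto. pose proof (Kabs_pos _ a); lra. }
    exists N1. intros m Hm. specialize (H1 m Hm).
    rewrite (Ksum_ext k _ (fun i => Kmul a (Kmul (sg i) (lval x i)))).
    rewrite Ksum_mul, Ksub_mul, Kabs_mul. pose proof (Kabs_pos _ a).
    pose proof (Kabs_pos _ (Kadd (Ksum (fun i => Kmul (sg i) (lval x i)) m) (Kopp (f x)))).
    apply Rle_lt_trans with (Kabs a * (eps / (Kabs a + 1))). apply Rmult_le_compat_l; lra.
    apply Rmult_lt_reg_l with (Kabs a + 1); [lra|]. field_simplify; lra.
    intro i. simpl. apply Kmul_swap.
  - exists 1. intro v. rewrite Rmult_1_l. apply Rnot_lt_le. intro Hlt.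
    destruct (Hf v (Kabs (f v) - norm v)) as [N HN]; [lra|]. specialize (HN N (le_n _)).
    pose proof (Kabs_sub_tri _ (f v) (Ksum (fun i => Kmul (sg i) (lval v i)) N) K0).
    rewrite !Ksub0, Kabs_sub_sym in H.
    pose proof (Ksum_abs k (fun i => Kmul (sg i) (lval v i)) N).
    pose proof (range_le (fun i => Kabs (Kmul (sg i) (lval v i))) (fun i => Kabs (lval v i)) 0 N ltac:(lia)).
    simpl in H1. rewrite !Rminus_0_r in H1.
    assert (ps (fun i => Kabs (Kmul (sg i) (lval v i))) N <= ps (fun i => Kabs (lval v i)) N).
    { apply H1. intros i _ _. rewrite Kabs_mul.
      pose proof (Kabs_pos _ (lval v i)). pose proof (Hsg i). pose proof (Kabs_pos _ (sg i)). nra. }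
    pose proof (l1_ps_le k v N). lra.
  - intros v M0 c Hc. apply Rnot_lt_ge. intro Hlt.
    destruct (Hf v (c - Kre (f v))) as [N HN]; [lra|]. specialize (HN (max N M0) ltac:(lia)).
    specialize (Hc (max N M0) ltac:(lia)). rewrite <- Ksum_re in Hc.
    pose proof (Kre_le _ (Kadd (Ksum (fun i => Kmul (sg i) (lval v i)) (max N M0)) (Kopp (f v)))).
    rewrite Kre_add, Kre_opp in H. pose proof (Rle_abs (Kre (Ksum (fun i => Kmul (sg i) (lval v i)) (max N M0)) + - Kre (f v))).
    lra.
Qed.

Definition ph {k} : K k -> K k :=
  match k return K k -> K k with
  | RealScalars => fun a : R => if Rle_dec 0 a then 1 else -1
  | ComplexScalars => fun a : R * R =>
      let r := sqrt (fst a * fst a + snd a * snd a) in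
      if Req_EM_T r 0 then ((1, 0) : R * R) else ((fst a / r, - snd a / r) : R * R)
  end.

Lemma ph_spec k (a : K k) : Kabs (ph a) <= 1 /\ Kre (Kmul (ph a) a) = Kabs a.
Proof. destruct k; simpl.
  - destruct (Rle_dec 0 a); simpl; split.
    + rewrite Rabs_R1; lra. + rewrite Rabs_right; lra.
    + rewrite Rabs_left; lra. + rewrite Rabs_left; lra.
  - destruct a as [x y]; simpl. set (r := sqrt (x * x + y * y)).
    assert (Hr : r * r = x * x + y * y) by (apply sqrt_sqrt; nra).
    assert (Hr0 : 0 <= r) by apply sqrt_pos.
    destruct (Req_EM_T r 0) as [E|E]; simpl.
    + split. replace (1 * 1 + 0 * 0) with 1 by ring. rewrite sqrt_1; lra.
      fold r. rewrite E. rewrite E in Hr. nra.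
    + split. right. replace (x / r * (x / r) + - y / r * (- y / r)) with 1. apply sqrt_1.
      replace (x / r * (x / r) + - y / r * (- y / r)) with ((x * x + y * y) / (r * r)) by (field; auto).
      rewrite <- Hr. field. auto.
      fold r. replace (x / r * x - - y / r * y) with ((x * x + y * y) / r) by (field; auto).
      rewrite <- Hr. field. auto.
Qed.

Lemma re_mul_ge k (s a : K k) : Kabs s <= 1 -> Kre (Kmul s a) >= - Kabs a.
Proof. intro Hs. pose proof (Kre_le _ (Kmul s a)). rewrite Kabs_mul in H.
  pose proof (Kabs_pos _ a). pose proof (Kabs_pos _ s). pose proof (Rle_abs (- Kre (Kmul s a))).
  rewrite Rabs_Ropp in H2. nra. Qed.

Lemma ps_opp (a : nat -> R) n : ps (fun i => - a i) n = - ps a n.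
Proof. induction n; simpl. ring. rewrite IHn. ring. Qed.

Fixpoint iter_st (F : nat * nat -> nat * nat) (j : nat) : nat * nat :=
  match j with O => (O, O) | S j => F (iter_st F j) end.

Lemma ell1_schur k : schur_property (ell1 k).
Proof.
  intros u l Hw. pose proof (ell1_normed k) as HN.
  set (w := fun n => vsub (u n) l).
  assert (Hwk : forall f, is_bounded_functional f -> Un_cv (fun n => Kabs (f (w n))) 0).
  { intros f Hf. eapply Un_cv_ext. 2: apply (Hw f Hf). intro n. unfold w. rewrite (f_sub HN f Hf). reflexivity. }
  change (Un_cv (fun n => norm (w n)) 0).
  apply NNPP. intro Hn. apply not_Un_cv_0 in Hn. destruct Hn as (eps & He & Hinf).
  assert (Hcoord : forall B e, e > 0 -> exists N, forall n, (n >= N)%nat -> ps (fun i => Kabs (lval (w n) i)) B < e).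
  { intro B. induction B as [|B IH]; intros e Hee.
    - exists O. intros. simpl. lra.
    - destruct (IH (e/2)) as [N1 H1]; [lra|].
      destruct (Hwk _ (coord_bf k B) (e/2)) as [N2 H2]; [lra|].
      exists (max N1 N2). intros n Hn. specialize (H1 n ltac:(lia)). specialize (H2 n ltac:(lia)).
      unfold R_dist in H2. rewrite Rminus_0_r, Rabs_right in H2 by (apply Rle_ge, Kabs_pos). cbv beta in H2. cbn [ps]. lra. }
  assert (Hstep : forall (st : nat * nat), exists st' : nat * nat,
     (snd st' > snd st)%nat /\ eps <= norm (w (snd st')) /\ ps (fun i => Kabs (lval (w (snd st')) i)) (fst st) < eps / 5 /\
     (fst st' > fst st)%nat /\ norm (w (snd st')) - ps (fun i => Kabs (lval (w (snd st')) i)) (fst st') < eps / 5).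
  { intros [B n0]. simpl. destruct (Hcoord B (eps/5)) as [N1 H1]; [lra|].
    destruct (Hinf (max N1 (S n0))) as (n & Hn & Hnn). rewrite Rabs_right in Hnn by (apply Rle_ge, (norm_nonneg HN)).
    destruct (l1_ps_cv k (w n) (eps/5)) as [B'' HB'']; [lra|].
    exists (max B'' (S B), n). simpl. repeat split; try lia; auto. apply H1; lia. apply HB''; lia. }
  destruct (fchoice _ Hstep) as [F HF].
  set (st := iter_st F).
  set (Bj := fun j => fst (st j)). set (nj := fun j => snd (st (S j))).
  assert (HFj : forall j, (nj j > (match j with O => O | S j' => nj j' end))%nat /\ eps <= norm (w (nj j)) /\
      ps (fun i => Kabs (lval (w (nj j)) i)) (Bj j) < eps / 5 /\ (Bj (S j) > Bj j)%nat /\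
      norm (w (nj j)) - ps (fun i => Kabs (lval (w (nj j)) i)) (Bj (S j)) < eps / 5).
  { intro j. pose proof (HF (st j)). unfold nj, Bj. simpl. fold st.
    destruct j; simpl in *; fold st; auto. }
  assert (B0 : Bj O = O) by reflexivity.
  assert (B_S : forall j, (Bj (S j) > Bj j)%nat) by (intro j; apply HFj).
  assert (B_mono : forall i j, (i < j)%nat -> (Bj i < Bj j)%nat).
  { intros i j Hij. induction Hij. apply B_S. pose proof (B_S m). lia. }
  assert (n_ge : forall j, (nj j >= j)%nat).
  { intro j. induction j. lia. pose proof (proj1 (HFj (S j))). simpl in H. lia. }
  assert (blk_ex : forall i, exists j, (Bj j <= i < Bj (S j))%nat).
  { intro i. induction i. exists O. pose proof (B_S O). lia.
    destruct IHi as [j Hj]. destruct (Nat.eq_dec (S i) (Bj (S j))) as [E|E].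
    - exists (S j). pose proof (B_S (S j)). lia.
    - exists j. lia. }
  assert (blk_un : forall i j j', (Bj j <= i < Bj (S j))%nat -> (Bj j' <= i < Bj (S j'))%nat -> j = j').
  { intros i j j' H1 H2. destruct (lt_eq_lt_dec j j') as [[Hlt|Heq]|Hlt]; auto.
    - assert (Bj (S j) <= Bj j')%nat. { destruct (Nat.eq_dec (S j) j'). subst; lia. pose proof (B_mono (S j) j'). lia. } lia.
    - assert (Bj (S j') <= Bj j)%nat. { destruct (Nat.eq_dec (S j') j). subst; lia. pose proof (B_mono (S j') j). lia. } lia. }
  set (blk := fun i => epsilon (inhabits O) (fun j => (Bj j <= i < Bj (S j))%nat)).
  assert (blk_spec : forall i j, (Bj j <= i < Bj (S j))%nat -> blk i = j).
  { intros i j Hj. apply (blk_un i). 2: auto. unfold blk. apply epsilon_spec. apply blk_ex. }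
  set (sg := fun i => ph (lval (w (nj (blk i))) i)).
  destruct (sigma_functional k sg) as (f & Hf & Hlow).
  { intro i. apply ph_spec. }
  assert (Hbig : forall j, Kre (f (w (nj j))) >= eps / 5).
  { intro j. set (v := w (nj j)). apply (Hlow v (Bj (S j))). intros M HM.
    set (r := fun i => Kre (Kmul (sg i) (lval v i))).
    set (a := fun i => Kabs (lval v i)).
    assert (Hr : forall i, r i >= - a i). { intro i. apply re_mul_ge. apply ph_spec. }
    assert (E1 : ps (fun i => - a i) (Bj j) - ps (fun i => - a i) O <= ps r (Bj j) - ps r O).
    { apply range_le. lia. intros; pose proof (Hr i); lra. }
    assert (E2 : ps a (Bj (S j)) - ps a (Bj j) <= ps r (Bj (S j)) - ps r (Bj j)).
    { apply range_le. pose proof (B_S j); lia. intros i Hi1 Hi2. unfold r, a, sg.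
      rewrite (blk_spec i j) by lia. right. symmetry. apply ph_spec. }
    assert (E3 : ps (fun i => - a i) M - ps (fun i => - a i) (Bj (S j)) <= ps r M - ps r (Bj (S j))).
    { apply range_le. lia. intros; pose proof (Hr i); lra. }
    rewrite !ps_opp in E1, E3. simpl in E1.
    pose proof (l1_ps_le k v M). fold a in H.
    destruct (HFj j) as (_ & Hn1 & Hn2 & _ & Hn3). fold v a in Hn1, Hn2, Hn3.
    lra. }
  destruct (Hwk f Hf (eps/5)) as [N HN']; [lra|]. specialize (HN' (nj N) (n_ge N)).
  unfold R_dist in HN'. rewrite Rminus_0_r, Rabs_right in HN' by (apply Rle_ge, Kabs_pos).
  pose proof (Kre_le _ (f (w (nj N)))). pose proof (Rle_abs (Kre (f (w (nj N))))). specialize (Hbig N). lra.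
Qed.

Theorem mainTheorem3 (k : scalar_field) :
  (forall X Y : NormedData k,
     is_Banach X -> is_Banach Y ->
     uniformly_convex X -> schur_property Y ->
     sBPBp X Y)
  /\ sBPBp (ell2 k) (ell1 k).
Proof.
  split.
  - intros X Y HX HY HU HS. destruct (Banach_split X HX) as [HXn HXc].
    destruct (Banach_split Y HY) as [HYn _]. apply general_sBPBp; auto.
  - apply general_sBPBp. apply ell2_normed. apply ell2_complete. apply ell1_normed.
    apply ell2_UC. apply ell1_schur.
Qed.
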